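(* Let $n\in\mathbb{Z}$. Let $t\in[0,1]\mapsto\gamma_t\in\mathcal{I}_n$ be a path and let $\tilde h:[0,1]^2\to\mathcal{I}_n$ be continuous with $\tilde h(0,t)=\gamma_t$ for all $t$. Assume that (i) the map $(t,s)\mapsto\gamma_t(s)$ is $C^1$ on $[0,1]\times S^1$; (ii) for all $t$, $\tilde h(1,t)$ is an embedding; (iii) for all $z$, $\tilde h(z,0)$ and $\tilde h(z,1)$ are embeddings. Then there exists a map $h:[0,1]^2\to\mathcal{I}_n$ such that: for all $t$, $h(0,t)=\gamma_t$; for every $z$, the map $h_z:(t,s)\mapsto h(z,t)(s)$ is $C^1$ on $[0,1]\times S^1$; the map $z\mapsto h_z$ is continuous from $[0,1]$ to the Banach space $C^1([0,1]\times S^1,\mathbb{R}^2)$; for all $t$, $h(1,t)$ is an embedding; and for all $z$, $h(z,0)$ and $h(z,1)$ are embeddings.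
   Context: $S^1=\mathbb{R}/\mathbb{Z}$ with base point $0$. $\mathcal{I}_n$ is the set of $C^1$ immersions $\gamma:S^1\to\mathbb{R}^2$ whose tangent vector has winding number $n$ and such that $\gamma'(0)$ is a positive multiple of $(1,0)$; it is topologized as a subset of the Banach space $C^1(S^1,\mathbb{R}^2)$ with norm $\max(\sup\|f\|,\sup\|f'\|)$. *)

(* Defs.v *)
From Stdlib Require Import Reals.
Open Scope R_scope.

Definition vec := (R * R)%type.
Definition vnorm (v : vec) : R := sqrt (fst v * fst v + snd v * snd v).
Definition vadd (u v : vec) : vec := (fst u + fst v, snd u + snd v).
Definition vsub (u v : vec) : vec := (fst u - fst v, snd u - snd v).
Definition vscal (a : R) (v : vec) : vec := (a * fst v, a * snd v).

Definition I01 (x : R) : Prop := 0 <= x <= 1.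

(* A map S^1 = R/Z -> R^2 is represented as a 1-periodic map R -> R^2. *)
Definition curve := (R -> vec)%type.
Definition periodic1 (g : curve) : Prop := forall s, g (s + 1) = g s.

Definition curve_deriv (g g' : curve) : Prop :=
  forall s, derivable_pt_lim (fun x => fst (g x)) s (fst (g' s)) /\
            derivable_pt_lim (fun x => snd (g x)) s (snd (g' s)).

Definition vcont (g : curve) : Prop :=
  forall s, continuity_pt (fun x => fst (g x)) s /\
            continuity_pt (fun x => snd (g x)) s.

Definition C1_curve_with (g g' : curve) : Prop :=
  periodic1 g /\ curve_deriv g g' /\ vcont g'.

(* Winding number of the (nowhere vanishing, 1-periodic) tangent g' is n:
   a continuous angle lift theta of g' satisfies theta 1 - theta 0 = 2 pi n. *)
Definition tangent_winding (g' : curve) (n : Z) : Prop :=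
  exists theta : R -> R,
    continuity theta /\
    (forall s, g' s = (vnorm (g' s) * cos (theta s), vnorm (g' s) * sin (theta s))) /\
    theta 1 - theta 0 = 2 * PI * IZR n.

Definition in_I (n : Z) (g : curve) : Prop :=
  exists g' : curve,
    C1_curve_with g g' /\
    (forall s, g' s <> (0, 0)) /\
    tangent_winding g' n /\
    snd (g' 0) = 0 /\ 0 < fst (g' 0).

(* Embedding of S^1: injective on a fundamental domain [0,1). *)
Definition is_embedding (g : curve) : Prop :=
  forall s s', 0 <= s < 1 -> 0 <= s' < 1 -> g s = g s' -> s = s'.

(* C^1-distance between g1 and g2 is at most eps
   (max(sup |g1-g2|, sup |g1'-g2'|) <= eps); derivatives are unique. *)
Definition C1_close (g1 g2 : curve) (eps : R) : Prop :=
  exists g1' g2' : curve,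
    curve_deriv g1 g1' /\ curve_deriv g2 g2' /\
    forall s, vnorm (vsub (g1 s) (g2 s)) <= eps /\
              vnorm (vsub (g1' s) (g2' s)) <= eps.

Definition path_in_I (n : Z) (gam : R -> curve) : Prop :=
  (forall t, I01 t -> in_I n (gam t)) /\
  forall t0, I01 t0 -> forall eps, 0 < eps -> exists delta, 0 < delta /\
    forall t, I01 t -> Rabs (t - t0) < delta -> C1_close (gam t) (gam t0) eps.

Definition square_map_in_I (n : Z) (H : R -> R -> curve) : Prop :=
  (forall z t, I01 z -> I01 t -> in_I n (H z t)) /\
  forall z0 t0, I01 z0 -> I01 t0 -> forall eps, 0 < eps -> exists delta, 0 < delta /\
    forall z t, I01 z -> I01 t -> Rabs (z - z0) < delta -> Rabs (t - t0) < delta ->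
      C1_close (H z t) (H z0 t0) eps.

Definition C1_cyl_with (H Dt Ds : R -> curve) : Prop :=
  (forall t s, I01 t -> H t (s + 1) = H t s) /\
  (forall t s, I01 t -> forall eps, 0 < eps -> exists delta, 0 < delta /\
     forall t' s', I01 t' -> Rabs (t' - t) < delta -> Rabs (s' - s) < delta ->
       vnorm (vsub (vsub (H t' s') (H t s))
                   (vadd (vscal (t' - t) (Dt t s)) (vscal (s' - s) (Ds t s))))
         <= eps * (Rabs (t' - t) + Rabs (s' - s))) /\
  (forall t s, I01 t -> forall eps, 0 < eps -> exists delta, 0 < delta /\
     forall t' s', I01 t' -> Rabs (t' - t) < delta -> Rabs (s' - s) < delta ->
       vnorm (vsub (Dt t' s') (Dt t s)) <= eps /\
       vnorm (vsub (Ds t' s') (Ds t s)) <= eps).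

Definition C1_cyl (H : R -> curve) : Prop :=
  exists Dt Ds : R -> curve, C1_cyl_with H Dt Ds.

(* Main.v *)
Require Import Defs.
From Stdlib Require Import Reals Lra Lia Psatz ClassicalEpsilon FunctionalExtensionality Classical List ZArith.
From Coquelicot Require Compactness.
Open Scope R_scope.


Lemma sq_le (a b : R) : 0 <= b -> a * a <= b * b -> a <= b.
Proof. intros. nra. Qed.

Lemma vnorm_ge0 v : 0 <= vnorm v.
Proof. unfold vnorm; apply sqrt_pos. Qed.

Lemma vnorm_sq v : vnorm v * vnorm v = fst v * fst v + snd v * snd v.
Proof. unfold vnorm; apply sqrt_sqrt; nra. Qed.

Lemma vnorm_fst v : Rabs (fst v) <= vnorm v.
Proof.
  apply sq_le. apply vnorm_ge0. rewrite vnorm_sq.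
  rewrite <- Rabs_mult, Rabs_right by nra. nra.
Qed.

Lemma vnorm_snd v : Rabs (snd v) <= vnorm v.
Proof.
  apply sq_le. apply vnorm_ge0. rewrite vnorm_sq.
  rewrite <- Rabs_mult, Rabs_right by nra. nra.
Qed.

Lemma vnorm_le_sum v : vnorm v <= Rabs (fst v) + Rabs (snd v).
Proof.
  apply sq_le. pose proof (Rabs_pos (fst v)); pose proof (Rabs_pos (snd v)); lra.
  rewrite vnorm_sq.
  assert (Rabs (fst v) * Rabs (fst v) = fst v * fst v) by (rewrite <- Rabs_mult, Rabs_right; nra).
  assert (Rabs (snd v) * Rabs (snd v) = snd v * snd v) by (rewrite <- Rabs_mult, Rabs_right; nra).
  pose proof (Rabs_pos (fst v)); pose proof (Rabs_pos (snd v)). nra.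
Qed.

Lemma dot_le u v : fst u * fst v + snd u * snd v <= vnorm u * vnorm v.
Proof.
  pose proof (vnorm_sq u); pose proof (vnorm_sq v); pose proof (vnorm_ge0 u); pose proof (vnorm_ge0 v).
  destruct (Rle_dec (fst u * fst v + snd u * snd v) 0). nra.
  apply sq_le. nra.
  replace (vnorm u * vnorm v * (vnorm u * vnorm v)) with ((vnorm u * vnorm u) * (vnorm v * vnorm v)) by ring.
  rewrite H, H0.
  pose proof (pow2_ge_0 (fst u * snd v - snd u * fst v)). nra.
Qed.

Lemma vnorm_triangle u v : vnorm (vadd u v) <= vnorm u + vnorm v.
Proof.
  apply sq_le. pose proof (vnorm_ge0 u); pose proof (vnorm_ge0 v); lra.
  rewrite vnorm_sq. unfold vadd; simpl.
  pose proof (vnorm_sq u); pose proof (vnorm_sq v); pose proof (dot_le u v). nra.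
Qed.


Lemma vnorm_scal a v : vnorm (vscal a v) = Rabs a * vnorm v.
Proof.
  unfold vnorm, vscal; simpl.
  replace (a * fst v * (a * fst v) + a * snd v * (a * snd v)) with ((a*a) * (fst v * fst v + snd v * snd v)) by ring.
  rewrite sqrt_mult by nra. f_equal.
  replace (a * a) with (Rabs a * Rabs a) by (rewrite <- Rabs_mult; apply Rabs_right; nra).
  apply sqrt_square, Rabs_pos.
Qed.

Lemma vnorm_eq v w : fst v = fst w -> snd v = snd w -> vnorm v = vnorm w.
Proof. intros; unfold vnorm; rewrite H, H0; auto. Qed.

Ltac veq := apply injective_projections; simpl; ring.

Lemma vnorm_sub_sym u v : vnorm (vsub u v) = vnorm (vsub v u).
Proof.
  replace (vsub u v) with (vscal (-1) (vsub v u)) by veq.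
  rewrite vnorm_scal. replace (Rabs (-1)) with 1 by (rewrite Rabs_left; lra). ring.
Qed.

Lemma vnorm_sub_tri u v w : vnorm (vsub u w) <= vnorm (vsub u v) + vnorm (vsub v w).
Proof.
  replace (vsub u w) with (vadd (vsub u v) (vsub v w)) by veq. apply vnorm_triangle.
Qed.

Lemma vnorm_pos v : v <> (0,0) -> 0 < vnorm v.
Proof.
  intros H. destruct (vnorm_ge0 v); auto. exfalso; apply H.
  pose proof (vnorm_sq v). rewrite <- H0 in H1.
  destruct v as [x y]; simpl in *. f_equal; nra.
Qed.

Lemma vnorm_zero v : vnorm v = 0 -> v = (0,0).
Proof.
  intros H. pose proof (vnorm_sq v). rewrite H in H0.
  destruct v as [x y]; simpl in *. f_equal; nra.
Qed.

Lemma vnorm_small_zero v : (forall e, 0 < e -> vnorm v <= e) -> v = (0,0).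
Proof.
  intros H. apply vnorm_zero. pose proof (vnorm_ge0 v).
  destruct H0; auto. specialize (H (vnorm v / 2)). lra.
Qed.

Definition vsum (N : nat) (v : nat -> vec) : vec :=
  (sum_f_R0 (fun j => fst (v j)) N, sum_f_R0 (fun j => snd (v j)) N).

Lemma vsum_S N v : vsum (S N) v = vadd (vsum N v) (v (S N)).
Proof. reflexivity. Qed.

Lemma vsum_0 v : vsum 0 v = v 0%nat.
Proof. unfold vsum; simpl. destruct (v 0%nat); auto. Qed.

Lemma vsum_ext N v w : (forall j, (j <= N)%nat -> v j = w j) -> vsum N v = vsum N w.
Proof.
  induction N; intros H. rewrite !vsum_0; apply H; lia.
  rewrite !vsum_S, IHN by (intros; apply H; lia). rewrite (H (S N)) by lia. auto.
Qed.

Lemma vnorm_vsum_le N v : vnorm (vsum N v) <= sum_f_R0 (fun j => vnorm (v j)) N.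
Proof.
  induction N. rewrite vsum_0; simpl; lra.
  rewrite vsum_S; simpl. eapply Rle_trans. apply vnorm_triangle. lra.
Qed.

Lemma vsum_const_scal N w x : vsum N (fun j => vscal (w j) x) = vscal (sum_f_R0 w N) x.
Proof.
  induction N. rewrite vsum_0; auto.
  rewrite vsum_S, IHN. simpl. veq.
Qed.

Lemma vsum_sub N v w : vsub (vsum N v) (vsum N w) = vsum N (fun j => vsub (v j) (w j)).
Proof.
  induction N. rewrite !vsum_0; auto.
  rewrite !vsum_S, <- IHN. veq.
Qed.

Lemma vsum_add N v w : vadd (vsum N v) (vsum N w) = vsum N (fun j => vadd (v j) (w j)).
Proof.
  induction N. rewrite !vsum_0; auto.
  rewrite !vsum_S, <- IHN. veq.
Qed.

Lemma vsum_scal N a v : vscal a (vsum N v) = vsum N (fun j => vscal a (v j)).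
Proof.
  induction N. rewrite !vsum_0; auto.
  rewrite !vsum_S, <- IHN. veq.
Qed.

Lemma sum_le_gen N (f g : nat -> R) : (forall j, (j <= N)%nat -> f j <= g j) -> sum_f_R0 f N <= sum_f_R0 g N.
Proof.
  induction N; intros H; simpl. apply H; lia.
  pose proof (H (S N) (le_n _)). pose proof (IHN (fun j Hj => H j (le_S _ _ Hj))). lra.
Qed.

Lemma sum_const_mul N (f : nat -> R) e : sum_f_R0 (fun j => f j * e) N = sum_f_R0 f N * e.
Proof. induction N; simpl; try rewrite IHN; ring. Qed.

Lemma convex_bound N (w : nat -> R) (v : nat -> vec) x e :
  (forall j, (j <= N)%nat -> 0 <= w j) -> sum_f_R0 w N = 1 ->
  (forall j, (j <= N)%nat -> 0 < w j -> vnorm (vsub (v j) x) <= e) ->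
  vnorm (vsub (vsum N (fun j => vscal (w j) (v j))) x) <= e.
Proof.
  intros Hw Hs Hv.
  replace x with (vsum N (fun j => vscal (w j) x)) at 1 by (rewrite vsum_const_scal, Hs; destruct x; unfold vscal; simpl; f_equal; ring).
  rewrite vsum_sub. eapply Rle_trans. apply vnorm_vsum_le.
  eapply Rle_trans with (sum_f_R0 (fun j => w j * e) N).
  apply sum_le_gen. intros j Hj.
  replace (vsub (vscal (w j) (v j)) (vscal (w j) x)) with (vscal (w j) (vsub (v j) x)) by veq.
  rewrite vnorm_scal, Rabs_right by (apply Rle_ge, Hw; auto).
  destruct (Hw j Hj). apply Rmult_le_compat_l; try lra. apply Hv; auto.
  rewrite <- H; lra.
  rewrite sum_const_mul, Hs; lra.
Qed.

Lemma deriv_vsum N (c c' : nat -> curve) :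
  (forall j, (j <= N)%nat -> curve_deriv (c j) (c' j)) ->
  curve_deriv (fun s => vsum N (fun j => c j s)) (fun s => vsum N (fun j => c' j s)).
Proof.
  induction N; intros H s.
  - simpl. apply H; lia.
  - destruct (IHN (fun j Hj => H j (le_S _ _ Hj)) s) as [H1 H2].
    destruct (H (S N) (le_n _) s) as [H3 H4]. simpl in *. split.
    + apply (derivable_pt_lim_plus (fun x => sum_f_R0 (fun j => fst (c j x)) N) (fun x => fst (c (S N) x))); auto.
    + apply (derivable_pt_lim_plus (fun x => sum_f_R0 (fun j => snd (c j x)) N) (fun x => snd (c (S N) x))); auto.
Qed.

Lemma deriv_scal a c c' : curve_deriv c c' -> curve_deriv (fun s => vscal a (c s)) (fun s => vscal a (c' s)).
Proof.
  intros H s. destruct (H s). simpl. split.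
  apply (derivable_pt_lim_scal (fun x => fst (c x))); auto.
  apply (derivable_pt_lim_scal (fun x => snd (c x))); auto.
Qed.

Lemma vcont_vsum N (c : nat -> curve) :
  (forall j, (j <= N)%nat -> vcont (c j)) -> vcont (fun s => vsum N (fun j => c j s)).
Proof.
  induction N; intros H s.
  - simpl. apply H; lia.
  - destruct (IHN (fun j Hj => H j (le_S _ _ Hj)) s) as [H1 H2].
    destruct (H (S N) (le_n _) s) as [H3 H4]. simpl in *. split.
    + apply (continuity_pt_plus (fun x => sum_f_R0 (fun j => fst (c j x)) N) (fun x => fst (c (S N) x))); auto.
    + apply (continuity_pt_plus (fun x => sum_f_R0 (fun j => snd (c j x)) N) (fun x => snd (c (S N) x))); auto.
Qed.

Lemma vcont_scal a c : vcont c -> vcont (fun s => vscal a (c s)).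
Proof.
  intros H s. destruct (H s). simpl. split.
  apply (continuity_pt_scal (fun x => fst (c x))); auto.
  apply (continuity_pt_scal (fun x => snd (c x))); auto.
Qed.

Definition comb (N : nat) (w : nat -> R) (c : nat -> curve) : curve :=
  fun s => vsum N (fun j => vscal (w j) (c j s)).

Lemma comb_C1 N w c c' : (forall j, (j <= N)%nat -> C1_curve_with (c j) (c' j)) ->
  C1_curve_with (comb N w c) (comb N w c').
Proof.
  intros H. split; [|split].
  - intros s. unfold comb. apply vsum_ext. intros j Hj. destruct (H j Hj) as [P _]. rewrite P; auto.
  - unfold comb. apply (deriv_vsum N (fun j s => vscal (w j) (c j s))).
    intros j Hj. apply deriv_scal. apply H; auto.
  - unfold comb. apply (vcont_vsum N (fun j s => vscal (w j) (c' j s))).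
    intros j Hj. apply vcont_scal. apply H; auto.
Qed.


Definition Dc (g : curve) : curve := fun s =>
 (epsilon (inhabits 0) (fun l => derivable_pt_lim (fun x => fst (g x)) s l),
  epsilon (inhabits 0) (fun l => derivable_pt_lim (fun x => snd (g x)) s l)).

Lemma Dc_eq g g' : curve_deriv g g' -> Dc g = g'.
Proof.
  intros H. apply functional_extensionality; intros s. destruct (H s) as [H1 H2].
  unfold Dc. apply injective_projections; simpl.
  - apply (uniqueness_limite (fun x => fst (g x)) s). apply epsilon_spec. eauto. auto.
  - apply (uniqueness_limite (fun x => snd (g x)) s). apply epsilon_spec. eauto. auto.
Qed.

Lemma sum_zero N (f : nat -> R) : (forall j, (j <= N)%nat -> f j = 0) -> sum_f_R0 f N = 0.
Proof.
  induction N; intros H; simpl. apply H; lia. rewrite IHN, H; auto; lra.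
Qed.

Definition Cl (g g' : curve) (e : R) (f : curve) : Prop :=
  C1_curve_with f (Dc f) /\ snd (Dc f 0) = 0 /\
  forall s, vnorm (vsub (f s) (g s)) <= e /\ vnorm (vsub (Dc f s) (g' s)) <= e.

Lemma Cl_comb N w c g g' e :
  (forall j, (j <= N)%nat -> 0 <= w j) -> sum_f_R0 w N = 1 ->
  (forall j, (j <= N)%nat -> C1_curve_with (c j) (Dc (c j))) ->
  (forall j, (j <= N)%nat -> 0 < w j -> Cl g g' e (c j)) ->
  Cl g g' e (comb N w c).
Proof.
  intros Hw Hs HC HCl.
  pose proof (comb_C1 N w c (fun j => Dc (c j)) HC) as HC1.
  assert (E : Dc (comb N w c) = comb N w (fun j => Dc (c j))) by (apply Dc_eq, HC1).
  unfold Cl; rewrite E. split; [|split]; auto.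
  - unfold comb, vsum. change (sum_f_R0 (fun j => w j * snd (Dc (c j) 0)) N = 0). apply sum_zero. intros j Hj.
    destruct (Hw j Hj). destruct (HCl j Hj H) as [_ [H0 _]]. rewrite H0; ring.
    rewrite <- H; ring.
  - intros s; split; unfold comb; apply convex_bound; auto; intros j Hj Hp; apply (HCl j Hj Hp).
Qed.

Section Per.
Variable A : Type.
Lemma per_nat (F : R -> A) : (forall s, F (s + 1) = F s) -> forall k s, F (s + INR k) = F s.
Proof.
  intros H k; induction k; intros s. simpl; rewrite Rplus_0_r; auto.
  rewrite S_INR. replace (s + (INR k + 1)) with ((s + INR k) + 1) by ring. rewrite H; auto.
Qed.

Lemma per_Z (F : R -> A) : (forall s, F (s + 1) = F s) -> forall k s, F (s + IZR k) = F s.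
Proof.
  intros H k s. destruct (Z.le_gt_cases 0 k).
  - rewrite <- (Z2Nat.id k) by auto. rewrite <- INR_IZR_INZ. apply per_nat; auto.
  - replace k with (- Z.of_nat (Z.to_nat (- k)))%Z by lia.
    rewrite opp_IZR, <- INR_IZR_INZ.
    rewrite <- (per_nat F H (Z.to_nat (-k)) (s + - INR (Z.to_nat (- k)))).
    f_equal; ring.
Qed.
End Per.

Lemma reduce01 s : exists k : Z, 0 <= s - IZR k < 1.
Proof. exists (Int_part s). pose proof (base_Int_part s). lra. Qed.

Lemma per_reduce {A} (F : R -> A) : (forall s, F (s + 1) = F s) ->
  forall s, exists a, 0 <= a < 1 /\ F s = F a /\ exists k, s = a + IZR k.
Proof.
  intros H s. destruct (reduce01 s) as [k Hk]. exists (s - IZR k). split; auto.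
  split. rewrite <- (per_Z A F H k (s - IZR k)). f_equal; ring. exists k; ring.
Qed.

Lemma deriv_shift f x l : derivable_pt_lim f (x + 1) l -> derivable_pt_lim (fun y => f (y + 1)) x l.
Proof.
  intros H e He. destruct (H e He) as [d Hd]. exists d. intros h Hh0 Hh.
  replace (x + h + 1) with (x + 1 + h) by ring. apply Hd; auto.
Qed.

Lemma deriv_periodic g g' : periodic1 g -> curve_deriv g g' -> periodic1 g'.
Proof.
  intros P H s. destruct (H (s + 1)) as [H1 H2]. destruct (H s) as [H3 H4].
  apply deriv_shift in H1. apply deriv_shift in H2.
  assert (E1 : (fun y => fst (g (y + 1))) = (fun y => fst (g y))) by (apply functional_extensionality; intros; rewrite P; auto).
  assert (E2 : (fun y => snd (g (y + 1))) = (fun y => snd (g y))) by (apply functional_extensionality; intros; rewrite P; auto).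
  rewrite E1 in H1. rewrite E2 in H2.
  apply injective_projections; eapply uniqueness_limite; eauto.
Qed.

Lemma in_I_Dc n g : in_I n g ->
  C1_curve_with g (Dc g) /\ (forall s, Dc g s <> (0,0)) /\ tangent_winding (Dc g) n /\
  snd (Dc g 0) = 0 /\ 0 < fst (Dc g 0).
Proof.
  intros [g' [HC [Hnz [Hw [H0 H1]]]]].
  assert (E : Dc g = g') by (apply Dc_eq, HC). rewrite E. auto.
Qed.


Section Cov.
Variables a b a' b' : R.
Definition box (x y : R) := a <= x <= b /\ a' <= y <= b'.
Variable P : R -> R -> R -> Prop.
Hypothesis HP : forall u v, box u v -> exists r, 0 < r /\ P u v r.

Definition rad u v := epsilon (inhabits 1) (fun r => 0 < r /\ P u v r).
Definition rad' u v := if Rlt_dec 0 (rad u v) then rad u v else 1.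
Lemma rad'_pos u v : 0 < rad' u v.
Proof. unfold rad'. destruct Rlt_dec; lra. Qed.
Lemma rad'_spec u v : box u v -> 0 < rad' u v /\ P u v (rad' u v).
Proof.
  intros Hb. assert (H : 0 < rad u v /\ P u v (rad u v)) by (unfold rad; apply epsilon_spec; apply HP; auto).
  unfold rad'. destruct Rlt_dec; [auto | lra].
Qed.

Definition delta2 (t : Compactness.Tn 2 R) : posreal :=
  match t with (u, (v, _)) => mkposreal (rad' u v) (rad'_pos u v) end.

Lemma cover2 : exists l : list (R * R * R),
  (forall u v r, In (u, v, r) l -> 0 < r) /\
  (forall x y, box x y -> exists u v r, In (u, v, r) l /\ box u v /\ 0 < r /\ P u v r /\
     Rabs (x - u) < r /\ Rabs (y - v) < r).
Proof.
  pose proof (Compactness.compactness_list 2 (a, (a', tt)) (b, (b', tt)) delta2) as H.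
  apply NNPP in H. destruct H as [l Hl].
  exists (map (fun t : Compactness.Tn 2 R => match t with (u, (v, _)) => (u, v, rad' u v) end) l).
  split.
  - intros u v r Hin. apply in_map_iff in Hin. destruct Hin as [[u' [v' []]] [E _]].
    inversion E; subst. apply rad'_pos.
  - intros x y Hb. destruct (Hl (x, (y, tt))) as [[u [v []]] [Hin [Hbd Hcl]]].
    simpl. destruct Hb; tauto.
    simpl in Hbd, Hcl. exists u, v, (rad' u v).
    assert (Hbu : box u v) by (unfold box; tauto).
    destruct (rad'_spec u v Hbu).
    split. apply in_map_iff. exists (u, (v, tt)); auto. tauto.
Qed.

Definition delta2l (u v : R) : posreal := mkposreal (rad' u v / 2) ltac:(pose proof (rad'_pos u v); lra).

Lemma lebesgue2 : exists rho, 0 < rho /\ forall x y, box x y ->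
  exists u v r, box u v /\ 0 < r /\ P u v r /\ Rabs (x - u) < r / 2 /\ Rabs (y - v) < r / 2 /\ rho <= r / 2.
Proof.
  destruct (Compactness.compactness_value_2d a b a' b' delta2l) as [d Hd].
  exists d. split. apply cond_pos. intros x y Hb.
  assert (H := Hd x y (proj1 Hb) (proj2 Hb)). apply NNPP in H.
  destruct H as [u [v [Hu [Hv [H1 [H2 H3]]]]]]. simpl in *.
  exists u, v, (rad' u v). assert (Hbu : box u v) by (split; auto).
  destruct (rad'_spec u v Hbu). tauto.
Qed.
End Cov.

Lemma pos_lower2 a b a' b' (f : R -> R -> R) :
  (forall u v, box a b a' b' u v -> exists r, 0 < r /\ exists c, 0 < c /\
     forall x y, box a b a' b' x y -> Rabs (x - u) < r -> Rabs (y - v) < r -> c <= f x y) ->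
  exists c, 0 < c /\ forall x y, box a b a' b' x y -> c <= f x y.
Proof.
  intros H.
  destruct (cover2 a b a' b' _ H) as [l [_ Hl]].
  assert (G : exists c, 0 < c /\ forall u v r, In (u, v, r) l -> box a b a' b' u v ->
     (exists c, 0 < c /\ forall x y, box a b a' b' x y -> Rabs (x - u) < r -> Rabs (y - v) < r -> c <= f x y) ->
     forall x y, box a b a' b' x y -> Rabs (x - u) < r -> Rabs (y - v) < r -> c <= f x y).
  { clear Hl. induction l as [|[[u v] r] l IH].
    - exists 1; split; [lra|]. intros ? ? ? [].
    - destruct IH as [c [Hc IH]].
      destruct (classic (box a b a' b' u v /\ exists c, 0 < c /\ forall x y, box a b a' b' x y -> Rabs (x - u) < r -> Rabs (y - v) < r -> c <= f x y)) as [[Hb [c' [Hc' Hf]]] | Hn].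
      + exists (Rmin c c'). split. apply Rmin_glb_lt; auto.
        intros u0 v0 r0 [E | Hin] Hb0 Hex x y Hbx Hx Hy.
        * inversion E; subst. eapply Rle_trans. apply Rmin_r. apply Hf; auto.
        * eapply Rle_trans. apply Rmin_l. eapply IH; eauto.
      + exists c. split; auto. intros u0 v0 r0 [E | Hin] Hb0 Hex x y Hbx Hx Hy.
        * inversion E; subst. exfalso; apply Hn; auto.
        * eapply IH; eauto. }
  destruct G as [c [Hc G]]. exists c. split; auto.
  intros x y Hb. destruct (Hl x y Hb) as [u [v [r [Hin [Hbu [Hr [HP [Hx Hy]]]]]]]].
  eapply G; eauto.
Qed.

Lemma upper2 a b a' b' (f : R -> R -> R) :
  (forall u v, box a b a' b' u v -> exists r, 0 < r /\ exists M,
     forall x y, box a b a' b' x y -> Rabs (x - u) < r -> Rabs (y - v) < r -> f x y <= M) ->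
  exists M, forall x y, box a b a' b' x y -> f x y <= M.
Proof.
  intros H.
  destruct (pos_lower2 a b a' b' (fun x y => / (1 + Rmax 0 (f x y)))) as [c [Hc Hf]].
  - intros u v Hb. destruct (H u v Hb) as [r [Hr [M HM]]]. exists r; split; auto.
    exists (/ (1 + Rmax 0 M)). split. apply Rinv_0_lt_compat. pose proof (Rmax_l 0 M); lra.
    intros x y Hbx Hx Hy. apply Rinv_le_contravar. pose proof (Rmax_l 0 (f x y)); lra.
    apply Rplus_le_compat_l. apply Rle_max_compat_l. apply HM; auto.
  - exists (/ c). intros x y Hb. specialize (Hf x y Hb).
    pose proof (Rmax_l 0 (f x y)). pose proof (Rmax_r 0 (f x y)).
    assert (c * (1 + Rmax 0 (f x y)) <= 1).
    { apply (Rmult_le_compat_r (1 + Rmax 0 (f x y))) in Hf; [|lra].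
      rewrite Rinv_l in Hf; lra. }
    apply (Rmult_le_reg_l c); auto. rewrite Rinv_r by lra. nra.
Qed.


Lemma cont_pt_eps f x : continuity_pt f x -> forall e, 0 < e -> exists d, 0 < d /\
  forall y, Rabs (y - x) < d -> Rabs (f y - f x) < e.
Proof.
  intros H e He. destruct (H e He) as [d [Hd Hy]]. exists d. split; auto.
  intros y Hyx. destruct (Req_dec y x). subst. rewrite Rminus_diag, Rabs_R0; auto.
  apply Hy. unfold D_x, no_cond. split; [split; [trivial | congruence] | exact Hyx].
Qed.

Lemma vcont_eps g x : vcont g -> forall e, 0 < e -> exists d, 0 < d /\
  forall y, Rabs (y - x) < d -> vnorm (vsub (g y) (g x)) <= e.
Proof.
  intros H e He. destruct (H x) as [H1 H2].
  destruct (cont_pt_eps _ _ H1 (e/2)) as [d1 [Hd1 D1]]. lra.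
  destruct (cont_pt_eps _ _ H2 (e/2)) as [d2 [Hd2 D2]]. lra.
  exists (Rmin d1 d2). split. apply Rmin_glb_lt; auto.
  intros y Hy. eapply Rle_trans. apply vnorm_le_sum. simpl.
  assert (Rabs (y - x) < d1) by (eapply Rlt_le_trans; [apply Hy | apply Rmin_l]).
  assert (Rabs (y - x) < d2) by (eapply Rlt_le_trans; [apply Hy | apply Rmin_r]).
  specialize (D1 y H0). specialize (D2 y H3). lra.
Qed.

Lemma per_curve_bounded g : periodic1 g -> vcont g -> exists M, forall s, vnorm (g s) <= M.
Proof.
  intros P C.
  destruct (upper2 0 1 0 0 (fun x _ => vnorm (g x))) as [M HM].
  - intros u v _. destruct (vcont_eps g u C 1) as [d [Hd D]]. lra.
    exists d; split; auto. exists (vnorm (g u) + 1). intros x y _ Hx _.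
    specialize (D x Hx). pose proof (vnorm_sub_tri (g x) (g u) (0,0)).
    replace (vsub (g x) (0,0)) with (g x) in H by (destruct (g x); unfold vsub; simpl; f_equal; ring).
    replace (vsub (g u) (0,0)) with (g u) in H by (destruct (g u); unfold vsub; simpl; f_equal; ring). lra.
  - exists M. intros s. destruct (per_reduce g P s) as [a [Ha [E _]]]. rewrite E.
    apply (HM a 0). split; lra.
Qed.

Lemma per_curve_lower g : periodic1 g -> vcont g -> (forall s, g s <> (0,0)) ->
  exists m, 0 < m /\ forall s, m <= vnorm (g s).
Proof.
  intros P C Nz.
  destruct (pos_lower2 0 1 0 0 (fun x _ => vnorm (g x))) as [m [Hm HM]].
  - intros u v _. pose proof (vnorm_pos _ (Nz u)).
    destruct (vcont_eps g u C (vnorm (g u) / 2)) as [d [Hd D]]. lra.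
    exists d; split; auto. exists (vnorm (g u) / 2). split. lra. intros x y _ Hx _.
    specialize (D x Hx). pose proof (vnorm_sub_tri (g u) (g x) (0,0)).
    rewrite vnorm_sub_sym in D.
    replace (vsub (g x) (0,0)) with (g x) in H0 by (destruct (g x); unfold vsub; simpl; f_equal; ring).
    replace (vsub (g u) (0,0)) with (g u) in H0 by (destruct (g u); unfold vsub; simpl; f_equal; ring). lra.
  - exists m. split; auto. intros s. destruct (per_reduce g P s) as [a [Ha [E _]]]. rewrite E.
    apply (HM a 0). split; lra.
Qed.

Lemma per_curve_unif g : periodic1 g -> vcont g -> forall e, 0 < e -> exists eta, 0 < eta /\
  forall s s', Rabs (s - s') < eta -> vnorm (vsub (g s) (g s')) <= e.
Proof.
  intros P C e He.
  destruct (lebesgue2 0 1 0 0 (fun u _ r => forall x, Rabs (x - u) < r -> vnorm (vsub (g x) (g u)) <= e / 2)) as [rho [Hrho Hl]].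
  - intros u v _. apply vcont_eps; auto. lra.
  - exists rho. split; auto. intros s s' Hss.
    destruct (reduce01 s) as [k Hk].
    assert (E1 : g s = g (s - IZR k)) by (rewrite <- (per_Z _ g P k (s - IZR k)); f_equal; ring).
    assert (E2 : g s' = g (s' - IZR k)) by (rewrite <- (per_Z _ g P k (s' - IZR k)); f_equal; ring).
    rewrite E1, E2.
    destruct (Hl (s - IZR k) 0) as [u [v [r [Hb [Hr [HP [Hx [_ Hrr]]]]]]]]. split; lra.
    pose proof (HP (s - IZR k) ltac:(lra)).
    assert (Rabs (s' - IZR k - u) < r).
    { replace (s' - IZR k - u) with ((s' - s) + (s - IZR k - u)) by ring.
      eapply Rle_lt_trans. apply Rabs_triang. rewrite <- Rabs_Ropp in Hss.
      replace (- (s - s')) with (s' - s) in Hss by ring. lra. }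
    pose proof (HP _ H0). pose proof (vnorm_sub_tri (g (s - IZR k)) (g u) (g (s' - IZR k))).
    rewrite (vnorm_sub_sym (g u)) in H2. lra.
Qed.


Lemma angle_identity (r rho c sn f1 f2 dt cr : R) :
  0 < r -> c * c + sn * sn = 1 -> rho * rho = f1 * f1 + f2 * f2 -> 0 <= rho ->
  dt = r * c * f1 + r * sn * f2 -> cr = r * c * f2 - r * sn * f1 -> 0 < dt ->
  f1 = rho * cos (atan (cr / dt)) * c - rho * sin (atan (cr / dt)) * sn /\
  f2 = rho * cos (atan (cr / dt)) * sn + rho * sin (atan (cr / dt)) * c.
Proof.
  intros Hr Hcs Hrho Hrho0 Edt Ecr Hdt.
  assert (Hrho' : 0 < rho).
  { destruct Hrho0; auto. subst rho. assert (f1 = 0 /\ f2 = 0) by (split; nra). destruct H; subst. lra. }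
  assert (Hid : dt * dt + cr * cr = (r * rho) * (r * rho)).
  { replace ((r * rho) * (r * rho)) with (r * r * (rho * rho) * (c * c + sn * sn)) by (rewrite Hcs; ring).
    rewrite Hrho, Edt, Ecr. ring. }
  assert (Hq : 1 + (cr / dt)² = (r * rho / dt)²).
  { unfold Rsqr. transitivity ((dt * dt + cr * cr) / (dt * dt)). field; lra.
    rewrite Hid. field; lra. }
  assert (HS : sqrt (1 + (cr / dt)²) = r * rho / dt).
  { rewrite Hq. apply sqrt_Rsqr. apply Rlt_le. apply Rdiv_lt_0_compat; nra. }
  rewrite cos_atan, sin_atan, HS.
  assert (E1 : c * dt - sn * cr = r * f1) by (rewrite Edt, Ecr; replace (r * f1) with (r * f1 * (c * c + sn * sn)) by (rewrite Hcs; ring); ring).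
  assert (E2 : sn * dt + c * cr = r * f2) by (rewrite Edt, Ecr; replace (r * f2) with (r * f2 * (c * c + sn * sn)) by (rewrite Hcs; ring); ring).
  split.
  - transitivity ((c * dt - sn * cr) / r). rewrite E1; field; lra. field; split; lra.
  - transitivity ((sn * dt + c * cr) / r). rewrite E2; field; lra. field; split; lra.
Qed.

Lemma cont_atan x : continuity_pt atan x.
Proof. apply derivable_continuous_pt. exists (/ (1 + x ^ 2)). apply derivable_pt_lim_atan. Qed.

Lemma lemmaA n g f m e : in_I n g -> 0 < m -> (forall s, m <= vnorm (Dc g s)) -> e < m ->
  Cl g (Dc g) e f -> in_I n f.
Proof.
  intros Hg Hm Hlow Hem [HCf [Hf0 Hcl]].
  destruct (in_I_Dc n g Hg) as [HCg [Hnz [[th [Hth [Hrep Hw]]] [Hg0 Hg0']]]].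
  set (G := Dc g) in *. set (F := Dc f) in *. clearbody G F.
  assert (PG : periodic1 G) by (destruct HCg as [P [Hd _]]; exact (deriv_periodic _ _ P Hd)).
  assert (PF : periodic1 F) by (destruct HCf as [P [Hd _]]; exact (deriv_periodic _ _ P Hd)).
  assert (CG : vcont G) by (destruct HCg as [_ [_ C]]; auto).
  assert (CF : vcont F) by (destruct HCf as [_ [_ C]]; auto).
  set (dt := fun s => fst (G s) * fst (F s) + snd (G s) * snd (F s)).
  set (cr := fun s => fst (G s) * snd (F s) - snd (G s) * fst (F s)).
  assert (Hdt : forall s, 0 < dt s).
  { intros s. destruct (Hcl s) as [_ H]. pose proof (Hlow s).
    assert (Hlt : vnorm (vsub (F s) (G s)) < vnorm (G s)) by lra.
    pose proof (vnorm_ge0 (vsub (F s) (G s))).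
    assert (vnorm (vsub (F s) (G s)) * vnorm (vsub (F s) (G s)) < vnorm (G s) * vnorm (G s)) by nra.
    rewrite !vnorm_sq in H2. unfold vsub in H2; simpl in H2. unfold dt; cbv beta. pose proof (pow2_ge_0 (fst (F s))); pose proof (pow2_ge_0 (snd (F s))).
    nra. }
  exists F. split; auto. split; [|split; [|split]]; auto.
  - intros s E. destruct (Hcl s) as [_ H]. rewrite E in H. pose proof (Hlow s).
    replace (vsub (0,0) (G s)) with (vscal (-1) (G s)) in H by (unfold vsub, vscal; simpl; f_equal; ring).
    rewrite vnorm_scal in H. replace (Rabs (-1)) with 1 in H by (rewrite Rabs_left; lra). lra.
  - exists (fun s => th s + atan (cr s / dt s)). split; [|split].
    + intros x. apply (continuity_pt_plus th (fun s => atan (cr s / dt s))). apply Hth.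
      apply (continuity_pt_comp (fun s => cr s / dt s) atan). 2: apply cont_atan.
      destruct (CG x) as [G1 G2]. destruct (CF x) as [F1 F2].
      apply (continuity_pt_div cr dt). 3: pose proof (Hdt x); lra.
      * unfold cr. apply (continuity_pt_minus (fun s => fst (G s) * snd (F s)) (fun s => snd (G s) * fst (F s)));
        [apply (continuity_pt_mult (fun s => fst (G s)) (fun s => snd (F s))) | apply (continuity_pt_mult (fun s => snd (G s)) (fun s => fst (F s)))]; auto.
      * unfold dt. apply (continuity_pt_plus (fun s => fst (G s) * fst (F s)) (fun s => snd (G s) * snd (F s)));
        [apply (continuity_pt_mult (fun s => fst (G s)) (fun s => fst (F s))) | apply (continuity_pt_mult (fun s => snd (G s)) (fun s => snd (F s)))]; auto.
    + intros s. specialize (Hrep s).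
      pose proof (vnorm_pos _ (Hnz s)) as Hr.
      assert (E1 : fst (G s) = vnorm (G s) * cos (th s)) by (rewrite Hrep at 1; auto).
      assert (E2 : snd (G s) = vnorm (G s) * sin (th s)) by (rewrite Hrep at 1; auto).
      destruct (angle_identity (vnorm (G s)) (vnorm (F s)) (cos (th s)) (sin (th s)) (fst (F s)) (snd (F s)) (dt s) (cr s))
        as [A1 A2]; auto.
      * pose proof (sin2_cos2 (th s)). unfold Rsqr in H. lra.
      * apply vnorm_sq.
      * apply vnorm_ge0.
      * unfold dt; rewrite E1, E2; ring.
      * unfold cr; rewrite E1, E2; ring.
      * rewrite cos_plus, sin_plus. apply injective_projections; simpl.
        rewrite A1 at 1; ring. rewrite A2 at 1; ring.
    + assert (dt 1 = dt 0 /\ cr 1 = cr 0) as [D1 D2].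
      { unfold dt, cr. replace 1 with (0 + 1) by ring. rewrite PG, PF. auto. }
      rewrite D1, D2. lra.
  - destruct (Hcl 0) as [_ H]. pose proof (Hlow 0).
    pose proof (vnorm_fst (vsub (F 0) (G 0))). simpl in H1.
    assert (vnorm (G 0) = fst (G 0)).
    { unfold vnorm. rewrite Hg0. replace (fst (G 0) * fst (G 0) + 0 * 0) with (fst (G 0) * fst (G 0)) by ring.
      apply sqrt_square; lra. }
    assert (Rabs (fst (F 0) - fst (G 0)) <= e) by lra.
    pose proof (Rle_abs (-(fst (F 0) - fst (G 0)))). rewrite Rabs_Ropp in H4. lra.
Qed.


Lemma deriv_vcont g g' : curve_deriv g g' -> vcont g.
Proof.
  intros H s. destruct (H s) as [H1 H2]. split; apply derivable_continuous_pt; eexists; eauto.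
Qed.

Lemma dot_ge u w : - (vnorm u * vnorm w) <= fst u * fst w + snd u * snd w.
Proof.
  pose proof (dot_le u (vscal (-1) w)). rewrite vnorm_scal in H.
  replace (Rabs (-1)) with 1 in H by (rewrite Rabs_left; lra). simpl in H. lra.
Qed.

Lemma no_int_01 (k : Z) : 0 < IZR k -> IZR k < 1 -> False.
Proof. intros H1 H2. apply lt_0_IZR in H1. apply lt_IZR in H2. lia. Qed.

Lemma emb_far g : periodic1 g -> is_embedding g -> forall x y, 0 < y - x < 1 -> g x <> g y.
Proof.
  intros P E x y Hxy Eq.
  destruct (per_reduce g P x) as [a [Ha [Ex [k Hk]]]].
  destruct (per_reduce g P y) as [b [Hb [Ey [k' Hk']]]].
  assert (a = b) by (apply E; auto; congruence).
  subst b. assert (IZR (k' - k) = y - x) by (rewrite minus_IZR; lra).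
  apply (no_int_01 (k' - k)); lra.
Qed.

Lemma near_inj f F G x y m eta0 :
  curve_deriv f F -> 0 < m -> (forall s, m <= vnorm (G s)) ->
  (forall s, vnorm (vsub (F s) (G s)) <= m / 4) ->
  (forall s s', Rabs (s - s') < eta0 -> vnorm (vsub (G s) (G s')) <= m / 4) ->
  x < y -> y - x < eta0 -> f x <> f y.
Proof.
  intros Hd Hm Hlow HFG Hunif Hxy Hy Eq.
  set (u := G x).
  destruct (MVT_cor2 (fun t => fst u * fst (f t) + snd u * snd (f t))
                     (fun t => fst u * fst (F t) + snd u * snd (F t)) x y Hxy) as [xi [Hxi Hxi']].
  { intros c _. destruct (Hd c) as [D1 D2].
    apply (derivable_pt_lim_plus (fun t => fst u * fst (f t)) (fun t => snd u * snd (f t))).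
    apply (derivable_pt_lim_scal (fun t => fst (f t))); auto.
    apply (derivable_pt_lim_scal (fun t => snd (f t))); auto. }
  rewrite Eq in Hxi.
  assert (Hz : fst u * fst (F xi) + snd u * snd (F xi) = 0).
  { assert ((fst u * fst (F xi) + snd u * snd (F xi)) * (y - x) = 0) by lra.
    apply Rmult_integral in H. destruct H; auto. lra. }
  pose proof (dot_ge u (vsub (F xi) (G xi))) as A1.
  pose proof (dot_ge u (vsub (G xi) u)) as A2.
  pose proof (HFG xi) as A3.
  assert (Hu : vnorm (vsub (G xi) u) <= m / 4) by (apply Hunif; rewrite Rabs_right; lra).
  pose proof (vnorm_sq u) as A4. pose proof (Hlow x) as A5. fold u in A5.
  pose proof (vnorm_ge0 (vsub (F xi) (G xi))) as A6. pose proof (vnorm_ge0 (vsub (G xi) u)) as A7.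
  simpl in A1, A2.
  assert (A8 : fst u * fst (F xi) + snd u * snd (F xi) =
          (fst u * fst u + snd u * snd u) + (fst u * (fst (F xi) - fst (G xi)) + snd u * (snd (F xi) - snd (G xi)))
          + (fst u * (fst (G xi) - fst u) + snd u * (snd (G xi) - snd u))) by ring.
  rewrite <- A4, Hz in A8.
  assert (vnorm u * vnorm (vsub (F xi) (G xi)) <= vnorm u * (m / 4)) by (apply Rmult_le_compat_l; auto; apply vnorm_ge0).
  assert (vnorm u * vnorm (vsub (G xi) u) <= vnorm u * (m / 4)) by (apply Rmult_le_compat_l; auto; apply vnorm_ge0).
  nra.
Qed.

Lemma far_bound g eta : periodic1 g -> vcont g -> is_embedding g -> 0 < eta < 1/2 ->
  exists c, 0 < c /\ forall x y, 0 <= x <= 1 -> 0 <= y <= 1 ->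
    c <= vnorm (vsub (g x) (g (x + eta + y * (1 - 2 * eta)))).
Proof.
  intros P C E Heta.
  destruct (pos_lower2 0 1 0 1 (fun x y => vnorm (vsub (g x) (g (x + eta + y * (1 - 2 * eta)))))) as [c [Hc H]].
  2: { exists c; split; auto. intros x y Hx Hy. apply H. split; auto. }
  intros u v [Hu Hv].
  set (u' := u + eta + v * (1 - 2 * eta)).
  set (p := vnorm (vsub (g u) (g u'))).
  assert (Hp : 0 < p).
  { apply vnorm_pos. intros Z. apply (emb_far g P E u u'). unfold u'; nra.
    apply injective_projections; simpl; unfold vsub in Z; inversion Z; lra. }
  destruct (vcont_eps g u C (p/4)) as [r1 [Hr1 D1]]. lra.
  destruct (vcont_eps g u' C (p/4)) as [r2 [Hr2 D2]]. lra.
  exists (Rmin r1 (r2/2)). split. apply Rmin_glb_lt; lra.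
  exists (p / 2). split. lra. intros x y _ Hx Hy.
  assert (Rabs (x - u) < r1) by (eapply Rlt_le_trans; [apply Hx | apply Rmin_l]).
  assert (Rabs (y - v) < r2 / 2) by (eapply Rlt_le_trans; [apply Hy | apply Rmin_r]).
  assert (Rabs (x - u) < r2 / 2) by (eapply Rlt_le_trans; [apply Hx | apply Rmin_r]).
  assert (Rabs ((x + eta + y * (1 - 2 * eta)) - u') < r2).
  { unfold u'. replace (x + eta + y * (1 - 2 * eta) - (u + eta + v * (1 - 2 * eta))) with ((x - u) + (y - v) * (1 - 2 * eta)) by ring.
    eapply Rle_lt_trans. apply Rabs_triang. rewrite Rabs_mult. rewrite (Rabs_right (1 - 2 * eta)) by lra.
    pose proof (Rabs_pos (y - v)). nra. }
  specialize (D1 x H). specialize (D2 _ H2).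
  pose proof (vnorm_sub_tri (g u) (g x) (g u')).
  pose proof (vnorm_sub_tri (g x) (g (x + eta + y * (1 - 2 * eta))) (g u')).
  rewrite vnorm_sub_sym in D1. fold p in H3. lra.
Qed.

Lemma lemmaB n g : in_I n g -> is_embedding g -> exists e, 0 < e /\
  forall f, Cl g (Dc g) e f -> is_embedding f.
Proof.
  intros Hg E.
  destruct (in_I_Dc n g Hg) as [HCg [Hnz _]].
  destruct HCg as [P [Hd C]]. set (G := Dc g) in *.
  assert (PG : periodic1 G) by exact (deriv_periodic _ _ P Hd).
  destruct (per_curve_lower G PG C Hnz) as [m [Hm Hlow]].
  destruct (per_curve_unif G PG C (m / 4)) as [eta0 [Heta0 Hunif]]. lra.
  set (eta := Rmin (eta0 / 2) (1 / 4)).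
  assert (Heta : 0 < eta < 1 / 2 /\ eta < eta0).
  { unfold eta. pose proof (Rmin_l (eta0/2) (1/4)). pose proof (Rmin_r (eta0/2) (1/4)).
    split; [split|]; try lra. apply Rmin_glb_lt; lra. }
  clearbody G eta.
  destruct (far_bound g eta P (deriv_vcont _ _ Hd) E (proj1 Heta)) as [c [Hc Hfar]].
  exists (Rmin (m / 4) (c / 3)). split. apply Rmin_glb_lt; lra.
  intros f [[Pf [Hdf Cf]] [_ Hcl]].
  assert (HFG : forall s, vnorm (vsub (Dc f s) (G s)) <= m / 4).
  { intros s. eapply Rle_trans. apply (Hcl s). apply Rmin_l. }
  assert (Hfg : forall s, vnorm (vsub (f s) (g s)) <= c / 3).
  { intros s. eapply Rle_trans. apply (Hcl s). apply Rmin_r. }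
  assert (Near : forall x y, x < y -> y - x <= eta -> f x <> f y).
  { intros x y Hxy Hy. apply (near_inj f (Dc f) G x y m eta0); auto. lra. }
  assert (Main : forall x y, 0 <= x < 1 -> 0 <= y < 1 -> x < y -> f x <> f y).
  { intros x y Hx Hy Hxy Eq.
    destruct (Rle_dec (y - x) eta).
    - apply (Near x y); auto.
    - destruct (Rle_dec (1 - eta) (y - x)).
      + apply (Near y (x + 1)). lra. lra. rewrite Pf. auto.
      + set (t := (y - x - eta) / (1 - 2 * eta)).
        assert (Ht : 0 <= t <= 1).
        { unfold t. split. apply Rmult_le_pos. lra. left; apply Rinv_0_lt_compat; lra.
          apply Rmult_le_reg_r with (1 - 2 * eta). lra. unfold Rdiv; rewrite Rmult_assoc, Rinv_l by lra. lra. }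
        assert (Ey : y = x + eta + t * (1 - 2 * eta)) by (unfold t; field; lra).
        clearbody t. pose proof (Hfar x t ltac:(lra) Ht). rewrite <- Ey in H.
        pose proof (vnorm_sub_tri (g x) (f x) (g y)).
        assert (Ez : vsub (f x) (g y) = vsub (f y) (g y)) by (rewrite Eq; auto). rewrite Ez in H0.
        pose proof (Hfg x) as H2. pose proof (Hfg y) as H3. rewrite vnorm_sub_sym in H2. clear -H H0 H2 H3 Hc. lra. }
  intros x y Hx Hy Eq. destruct (Rtotal_order x y) as [Hl | [He | Hl]]; auto.
  exfalso; apply (Main x y); auto.
  exfalso; apply (Main y x); auto.
Qed.


Lemma abs_sin_le a : Rabs (sin a) <= Rabs a.
Proof.
  assert (K : forall a, 0 < a -> Rabs (sin a) <= a).
  { intros b Hb. destruct (MVT_cor2 sin cos 0 b Hb) as [c [Hc _]].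
    intros; apply derivable_pt_lim_sin.
    rewrite sin_0 in Hc. pose proof (COS_bound c). apply Rabs_le. nra. }
  destruct (Rtotal_order a 0) as [H | [H | H]].
  - assert (E : sin a = - sin (-a)) by (rewrite sin_neg; ring). rewrite E, Rabs_Ropp, (Rabs_left a) by lra.
    apply K; lra.
  - subst; rewrite sin_0; lra.
  - rewrite (Rabs_right a) by lra. apply K; auto.
Qed.

Lemma local_deriv f g x l : (exists d, 0 < d /\ forall y, Rabs (y - x) < d -> f y = g y) ->
  derivable_pt_lim g x l -> derivable_pt_lim f x l.
Proof.
  intros [d [Hd E]] H e He. destruct (H e He) as [d' Hd'].
  assert (Hp : 0 < Rmin d d') by (apply Rmin_glb_lt; auto; apply cond_pos).
  exists (mkposreal _ Hp). intros h Hh0 Hh. simpl in Hh.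
  rewrite !E. apply Hd'; auto. eapply Rlt_le_trans; [apply Hh | apply Rmin_r].
  rewrite Rminus_diag, Rabs_R0; auto.
  replace (x + h - x) with h by ring. eapply Rlt_le_trans; [apply Hh | apply Rmin_l].
Qed.

Lemma local_cont f g x : (exists d, 0 < d /\ forall y, Rabs (y - x) < d -> f y = g y) ->
  continuity_pt g x -> continuity_pt f x.
Proof.
  intros [d [Hd E]] H e He. destruct (H e He) as [d' [Hd' H']].
  exists (Rmin d d'). split. apply Rmin_glb_lt; auto. intros y [Hy1 Hy2].
  simpl in *. unfold R_dist in *. rewrite !E. apply H'. split; auto. eapply Rlt_le_trans; [apply Hy2 | apply Rmin_r].
  rewrite Rminus_diag, Rabs_R0; auto.
  eapply Rlt_le_trans; [apply Hy2 | apply Rmin_l].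
Qed.

Lemma glue_deriv f x0 C : 0 < C -> f x0 = 0 -> (forall y, Rabs (f y) <= C * (y - x0) * (y - x0)) ->
  derivable_pt_lim f x0 0.
Proof.
  intros HC H0 Hb e He. assert (Hp : 0 < e / (2 * C)) by (apply Rdiv_lt_0_compat; lra).
  exists (mkposreal _ Hp). intros h Hh Hh'. simpl in Hh'. rewrite H0.
  specialize (Hb (x0 + h)). replace (x0 + h - x0) with h in Hb by ring.
  rewrite Rminus_0_r, Rminus_0_r. unfold Rdiv. rewrite Rabs_mult, Rabs_inv.
  apply Rmult_lt_reg_r with (Rabs h). apply Rabs_pos_lt; auto.
  rewrite Rmult_assoc, Rinv_l by (apply Rabs_no_R0; auto). rewrite Rmult_1_r.
  assert (Rabs h * Rabs h = h * h) by (rewrite <- Rabs_mult; apply Rabs_right; nra).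
  pose proof (Rabs_pos_lt h Hh).
  assert (C * Rabs h < e / 2).
  { apply Rmult_lt_reg_l with (/ C). apply Rinv_0_lt_compat; auto.
    rewrite <- Rmult_assoc, Rinv_l by lra. replace (/ C * (e / 2)) with (e / (2 * C)) by (field; lra). lra. }
  nra.
Qed.

Lemma glue_cont f x0 C : f x0 = 0 -> (forall y, Rabs (f y) <= C * Rabs (y - x0)) -> continuity_pt f x0.
Proof.
  intros H0 Hb e He. exists (e / (Rabs C + 1)). split. apply Rdiv_lt_0_compat; auto. pose proof (Rabs_pos C); lra.
  intros y [_ Hy]. simpl in *. unfold R_dist in *. rewrite H0, Rminus_0_r.
  eapply Rle_lt_trans. apply Hb. pose proof (Rabs_pos C). pose proof (Rabs_pos (y - x0)).
  apply Rle_lt_trans with (Rabs C * Rabs (y - x0)). pose proof (Rle_abs C). nra.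
  apply Rle_lt_trans with ((Rabs C + 1) * Rabs (y - x0)). nra.
  apply Rmult_lt_reg_l with (/ (Rabs C + 1)). apply Rinv_0_lt_compat; lra.
  rewrite <- Rmult_assoc, Rinv_l by lra. rewrite Rmult_1_l.
  replace (/ (Rabs C + 1) * e) with (e / (Rabs C + 1)) by (field; lra). auto.
Qed.

Definition Bf (x : R) : R := if Rle_dec (Rabs x) 1 then cos (PI / 2 * x) * cos (PI / 2 * x) else 0.
Definition dBf (x : R) : R := if Rle_dec (Rabs x) 1 then - (PI / 2) * sin (PI * x) else 0.

Lemma Bf_cos x : Rabs x <= 1 -> Bf x = cos (PI / 2 * x) * cos (PI / 2 * x).
Proof. unfold Bf; destruct Rle_dec; tauto. Qed.
Lemma Bf_out x : 1 <= Rabs x -> Bf x = 0.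
Proof.
  unfold Bf; destruct Rle_dec; auto. intros H. assert (Rabs x = 1) by lra.
  destruct (Rcase_abs x).
  - rewrite Rabs_left in H0 by auto. replace x with (-1) by lra.
    replace (PI / 2 * -1) with (- (PI/2)) by ring. rewrite cos_neg, cos_PI2; ring.
  - rewrite Rabs_right in H0 by auto. subst. rewrite Rmult_1_r, cos_PI2; ring.
Qed.
Lemma dBf_in x : Rabs x <= 1 -> dBf x = - (PI / 2) * sin (PI * x).
Proof. unfold dBf; destruct Rle_dec; tauto. Qed.
Lemma dBf_out x : 1 <= Rabs x -> dBf x = 0.
Proof.
  unfold dBf; destruct Rle_dec; auto. intros H. assert (Rabs x = 1) by lra.
  destruct (Rcase_abs x).
  - rewrite Rabs_left in H0 by auto. replace x with (-1) by lra.
    replace (PI * -1) with (- PI) by ring. rewrite sin_neg, sin_PI; ring.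
  - rewrite Rabs_right in H0 by auto. subst. rewrite Rmult_1_r, sin_PI; ring.
Qed.

Lemma Bf_range x : 0 <= Bf x <= 1.
Proof.
  unfold Bf; destruct Rle_dec. pose proof (COS_bound (PI/2*x)). split; nra. lra.
Qed.

Lemma dBf_bound x : Rabs (dBf x) <= 2.
Proof.
  unfold dBf; destruct Rle_dec. rewrite Rabs_mult. pose proof PI_4. pose proof PI_RGT_0.
  pose proof (SIN_bound (PI * x)). rewrite Rabs_Ropp, Rabs_right by lra.
  assert (Rabs (sin (PI * x)) <= 1) by (apply Rabs_le; lra).
  pose proof (Rabs_pos (sin (PI * x))). nra. rewrite Rabs_R0; lra.
Qed.

Lemma Bf_0 : Bf 0 = 1.
Proof. rewrite Bf_cos by (rewrite Rabs_R0; lra). rewrite Rmult_0_r, cos_0; ring. Qed.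

Lemma Bf_pos_in x : 0 < Bf x -> Rabs x < 1.
Proof. intros H. destruct (Rlt_le_dec (Rabs x) 1); auto. rewrite Bf_out in H; lra. Qed.

Lemma Bf_pou x : 0 <= x <= 1 -> Bf x + Bf (x - 1) = 1.
Proof.
  intros H. rewrite !Bf_cos.
  replace (PI / 2 * (x - 1)) with (PI / 2 * x - PI / 2) by ring.
  rewrite cos_minus, cos_PI2, sin_PI2. pose proof (sin2_cos2 (PI/2*x)). unfold Rsqr in H0. nra.
  rewrite Rabs_left1; lra. rewrite Rabs_right; lra.
Qed.

Lemma deriv_cos2 x : derivable_pt_lim (fun y => cos (PI / 2 * y) * cos (PI / 2 * y)) x (- (PI / 2) * sin (PI * x)).
Proof.
  assert (D : derivable_pt_lim (fun y => cos (PI / 2 * y)) x (- sin (PI / 2 * x) * (PI / 2))).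
  { apply (derivable_pt_lim_comp (fun y => PI / 2 * y) cos).
    assert (H : derivable_pt_lim (fun y => PI / 2 * y) x (PI / 2 * 1)) by (apply (derivable_pt_lim_scal id); apply derivable_pt_lim_id).
    rewrite Rmult_1_r in H. exact H.
    apply derivable_pt_lim_cos. }
  replace (- (PI / 2) * sin (PI * x)) with ((- sin (PI / 2 * x) * (PI / 2)) * cos (PI / 2 * x) + cos (PI / 2 * x) * (- sin (PI / 2 * x) * (PI / 2))).
  apply (derivable_pt_lim_mult (fun y => cos (PI / 2 * y)) (fun y => cos (PI / 2 * y))); auto.
  replace (PI * x) with (2 * (PI / 2 * x)) by field. rewrite sin_2a. ring.
Qed.

Lemma Bf_near1 y : Rabs (Bf y) <= 4 * (y - 1) * (y - 1).
Proof.
  unfold Bf; destruct Rle_dec.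
  - replace (PI / 2 * y) with (PI / 2 - PI / 2 * (1 - y)) by ring. rewrite cos_shift.
    pose proof (abs_sin_le (PI / 2 * (1 - y))). rewrite Rabs_mult in H.
    pose proof PI_4; pose proof PI_RGT_0. rewrite (Rabs_right (PI/2)) in H by lra.
    rewrite Rabs_right by (apply Rle_ge; apply Rle_0_sqr). pose proof (Rabs_pos (sin (PI / 2 * (1 - y)))).
    pose proof (Rabs_pos (1 - y)).
    assert (sin (PI / 2 * (1 - y)) * sin (PI / 2 * (1 - y)) = Rabs (sin (PI / 2 * (1 - y))) * Rabs (sin (PI / 2 * (1 - y)))) by (rewrite <- Rabs_mult, Rabs_right; [ring | apply Rle_ge; apply Rle_0_sqr]).
    assert ((y - 1) * (y - 1) = Rabs (1 - y) * Rabs (1 - y)) by (rewrite <- Rabs_mult, Rabs_right; [ring | apply Rle_ge; apply Rle_0_sqr]).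
    assert (Rabs (sin (PI / 2 * (1 - y))) * Rabs (sin (PI / 2 * (1 - y))) <= (PI / 2 * Rabs (1 - y)) * (PI / 2 * Rabs (1 - y))) by (apply Rmult_le_compat; auto).
    assert ((PI / 2 * Rabs (1 - y)) * (PI / 2 * Rabs (1 - y)) = (PI * PI / 4) * (Rabs (1 - y) * Rabs (1 - y))) by field.
    assert (PI * PI / 4 <= 4) by nra.
    pose proof (Rle_0_sqr (Rabs (1 - y))). unfold Rsqr in *.
    nra.
  - rewrite Rabs_R0. pose proof (Rle_0_sqr (y - 1)); pose proof (Rle_0_sqr (y - -1)); unfold Rsqr in *; nra.
Qed.

Lemma Bf_near_m1 y : Rabs (Bf y) <= 4 * (y - -1) * (y - -1).
Proof.
  unfold Bf; destruct Rle_dec.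
  - replace (PI / 2 * y) with (- (PI / 2 - PI / 2 * (1 + y))) by ring. rewrite cos_neg, cos_shift.
    pose proof (abs_sin_le (PI / 2 * (1 + y))). rewrite Rabs_mult in H.
    pose proof PI_4; pose proof PI_RGT_0. rewrite (Rabs_right (PI/2)) in H by lra.
    rewrite Rabs_right by (apply Rle_ge; apply Rle_0_sqr). pose proof (Rabs_pos (sin (PI / 2 * (1 + y)))).
    pose proof (Rabs_pos (1 + y)).
    assert (sin (PI / 2 * (1 + y)) * sin (PI / 2 * (1 + y)) = Rabs (sin (PI / 2 * (1 + y))) * Rabs (sin (PI / 2 * (1 + y)))) by (rewrite <- Rabs_mult, Rabs_right; [ring | apply Rle_ge; apply Rle_0_sqr]).
    assert ((y - -1) * (y - -1) = Rabs (1 + y) * Rabs (1 + y)) by (rewrite <- Rabs_mult, Rabs_right; [ring | apply Rle_ge; apply Rle_0_sqr]).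
    assert (Rabs (sin (PI / 2 * (1 + y))) * Rabs (sin (PI / 2 * (1 + y))) <= (PI / 2 * Rabs (1 + y)) * (PI / 2 * Rabs (1 + y))) by (apply Rmult_le_compat; auto).
    assert ((PI / 2 * Rabs (1 + y)) * (PI / 2 * Rabs (1 + y)) = (PI * PI / 4) * (Rabs (1 + y) * Rabs (1 + y))) by field.
    assert (PI * PI / 4 <= 4) by nra.
    pose proof (Rle_0_sqr (Rabs (1 + y))). unfold Rsqr in *.
    nra.
  - rewrite Rabs_R0. pose proof (Rle_0_sqr (y - 1)); pose proof (Rle_0_sqr (y - -1)); unfold Rsqr in *; nra.
Qed.

Lemma Bf_deriv x : derivable_pt_lim Bf x (dBf x).
Proof.
  destruct (Rtotal_order (Rabs x) 1) as [H | [H | H]].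
  - rewrite dBf_in by lra. apply local_deriv with (fun y => cos (PI / 2 * y) * cos (PI / 2 * y)).
    exists (1 - Rabs x). split. lra. intros y Hy. apply Bf_cos.
    pose proof (Rabs_triang_inv y x). pose proof (Rabs_triang (y - x) x). replace (y - x + x) with y in H1 by ring. lra.
    apply deriv_cos2.
  - rewrite dBf_out by lra. destruct (Rcase_abs x).
    + rewrite Rabs_left in H by auto. replace x with (-1) by lra.
      apply (glue_deriv Bf (-1) 4). lra. apply Bf_out; rewrite Rabs_left; lra. apply Bf_near_m1.
    + rewrite Rabs_right in H by auto. subst x.
      apply (glue_deriv Bf 1 4). lra. apply Bf_out; rewrite Rabs_right; lra. apply Bf_near1.
  - rewrite dBf_out by lra. apply local_deriv with (fun _ => 0).
    exists (Rabs x - 1). split. lra. intros y Hy. apply Bf_out.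
    pose proof (Rabs_triang (x - y) y). replace (x - y + y) with x in H0 by ring.
    rewrite <- Rabs_Ropp in Hy. replace (- (y - x)) with (x - y) in Hy by ring. lra.
    apply derivable_pt_lim_const.
Qed.

Lemma dBf_near1 y : Rabs (dBf y) <= 8 * Rabs (y - 1).
Proof.
  unfold dBf; destruct Rle_dec.
  - replace (sin (PI * y)) with (- sin (PI * (y - 1))) by (rewrite <- neg_sin; f_equal; ring).
    pose proof (abs_sin_le (PI * (y - 1))). rewrite Rabs_mult in H.
    pose proof PI_4; pose proof PI_RGT_0. rewrite (Rabs_right PI) in H by lra.
    rewrite Rabs_mult, Rabs_Ropp, Rabs_Ropp, (Rabs_right (PI/2)) by lra.
    pose proof (Rabs_pos (y - 1)). pose proof (Rabs_pos (sin (PI * (y - 1)))).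
    assert (PI / 2 * Rabs (sin (PI * (y - 1))) <= PI / 2 * (PI * Rabs (y - 1))) by (apply Rmult_le_compat_l; lra).
    nra.
  - rewrite Rabs_R0. pose proof (Rabs_pos (y - 1)). lra.
Qed.

Lemma dBf_near_m1 y : Rabs (dBf y) <= 8 * Rabs (y - -1).
Proof.
  unfold dBf; destruct Rle_dec.
  - replace (sin (PI * y)) with (- sin (PI * (y - -1))) by (replace (PI * (y - -1)) with (PI * y + PI) by ring; rewrite neg_sin; ring).
    pose proof (abs_sin_le (PI * (y - -1))). rewrite Rabs_mult in H.
    pose proof PI_4; pose proof PI_RGT_0. rewrite (Rabs_right PI) in H by lra.
    rewrite Rabs_mult, Rabs_Ropp, Rabs_Ropp, (Rabs_right (PI/2)) by lra.
    pose proof (Rabs_pos (y - -1)). pose proof (Rabs_pos (sin (PI * (y - -1)))).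
    assert (PI / 2 * Rabs (sin (PI * (y - -1))) <= PI / 2 * (PI * Rabs (y - -1))) by (apply Rmult_le_compat_l; lra).
    nra.
  - rewrite Rabs_R0. pose proof (Rabs_pos (y - -1)). lra.
Qed.

Lemma dBf_cont x : continuity_pt dBf x.
Proof.
  destruct (Rtotal_order (Rabs x) 1) as [H | [H | H]].
  - apply local_cont with (fun y => - (PI / 2) * sin (PI * y)).
    exists (1 - Rabs x). split. lra. intros y Hy. apply dBf_in.
    pose proof (Rabs_triang (y - x) x). replace (y - x + x) with y in H0 by ring. lra.
    apply derivable_continuous_pt. exists (- (PI / 2) * (cos (PI * x) * PI)).
    apply (derivable_pt_lim_scal (fun y => sin (PI * y))).
    apply (derivable_pt_lim_comp (fun y => PI * y) sin).
    assert (H1 : derivable_pt_lim (fun y => PI * y) x (PI * 1)) by (apply (derivable_pt_lim_scal id); apply derivable_pt_lim_id).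
    rewrite Rmult_1_r in H1. exact H1. apply derivable_pt_lim_sin.
  - destruct (Rcase_abs x).
    + rewrite Rabs_left in H by auto. replace x with (-1) by lra.
      apply (glue_cont dBf (-1) 8). apply dBf_out; rewrite Rabs_left; lra. apply dBf_near_m1.
    + rewrite Rabs_right in H by auto. subst x.
      apply (glue_cont dBf 1 8). apply dBf_out; rewrite Rabs_right; lra. apply dBf_near1.
  - apply local_cont with (fun _ => 0).
    exists (Rabs x - 1). split. lra. intros y Hy. apply dBf_out.
    pose proof (Rabs_triang (x - y) y). replace (x - y + y) with x in H0 by ring.
    rewrite <- Rabs_Ropp in Hy. replace (- (y - x)) with (x - y) in Hy by ring. lra.
    apply continuity_pt_const. intros a b; auto.
Qed.

Lemma Bf_lip x y : Rabs (Bf x - Bf y) <= 2 * Rabs (x - y).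
Proof.
  assert (K : forall a b, a < b -> Rabs (Bf b - Bf a) <= 2 * (b - a)).
  { intros a b Hab. destruct (MVT_cor2 Bf dBf a b Hab) as [c [Hc _]]. intros; apply Bf_deriv.
    rewrite Hc, Rabs_mult, (Rabs_right (b - a)) by lra. pose proof (dBf_bound c).
    apply Rmult_le_compat_r; lra. }
  destruct (Rtotal_order x y) as [H | [H | H]].
  - rewrite <- Rabs_Ropp. replace (- (Bf x - Bf y)) with (Bf y - Bf x) by ring.
    rewrite (Rabs_left (x - y)) by lra. pose proof (K x y H). lra.
  - subst. rewrite Rminus_diag, Rminus_diag, Rabs_R0. lra.
  - rewrite (Rabs_right (x - y)) by lra. apply K; auto.
Qed.

Lemma pou_zero N x : INR N + 1 <= x -> sum_f_R0 (fun j => Bf (x - INR j)) N = 0.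
Proof.
  intros H. apply sum_zero. intros j Hj. apply Bf_out. apply le_INR in Hj.
  rewrite Rabs_right; lra.
Qed.

Lemma pou N x : 0 <= x <= INR N -> sum_f_R0 (fun j => Bf (x - INR j)) N = 1.
Proof.
  revert x. induction N; intros x Hx.
  - simpl in *. replace x with 0 by lra. rewrite Rminus_0_r, Bf_0; auto.
  - rewrite tech5. pose proof (S_INR N) as HS. rewrite HS in Hx. destruct (Rle_dec x (INR N)).
    + rewrite IHN by lra. rewrite Bf_out. ring. rewrite HS, Rabs_left1; lra.
    + destruct N.
      * rewrite HS. simpl. rewrite Rminus_0_r. replace (x - (0 + 1)) with (x - 1) by ring.
        apply Bf_pou. simpl in *; lra.
      * apply Rnot_le_lt in n. pose proof (S_INR N). rewrite tech5. rewrite pou_zero. 2: lra.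
        rewrite HS. replace (x - (INR (S N) + 1)) with ((x - INR (S N)) - 1) by ring.
        rewrite Rplus_0_l. apply Bf_pou. lra.
Qed.


Lemma deriv_lin f x l : derivable_pt_lim f x l -> forall e, 0 < e -> exists d, 0 < d /\
  forall y, Rabs (y - x) < d -> Rabs (f y - f x - l * (y - x)) <= e * Rabs (y - x).
Proof.
  intros H e He. destruct (H e He) as [d Hd]. exists d. split. apply cond_pos.
  intros y Hy. destruct (Req_dec y x). rewrite H0. replace (x - x) with 0 by ring. replace (f x - f x - l * 0) with 0 by ring.
  rewrite Rabs_R0; lra.
  specialize (Hd (y - x) ltac:(lra) Hy). replace (x + (y - x)) with y in Hd by ring.
  replace (f y - f x - l * (y - x)) with (((f y - f x) / (y - x) - l) * (y - x)) by (field; lra).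
  rewrite Rabs_mult. apply Rmult_le_compat_r. apply Rabs_pos. lra.
Qed.

Lemma vderiv_lin c c' s : curve_deriv c c' -> forall e, 0 < e -> exists d, 0 < d /\
  forall y, Rabs (y - s) < d -> vnorm (vsub (vsub (c y) (c s)) (vscal (y - s) (c' s))) <= e * Rabs (y - s).
Proof.
  intros H e He. destruct (H s) as [H1 H2].
  destruct (deriv_lin _ _ _ H1 (e/2)) as [d1 [Hd1 D1]]. lra.
  destruct (deriv_lin _ _ _ H2 (e/2)) as [d2 [Hd2 D2]]. lra.
  exists (Rmin d1 d2). split. apply Rmin_glb_lt; auto. intros y Hy.
  assert (Rabs (y - s) < d1) by (eapply Rlt_le_trans; [apply Hy | apply Rmin_l]).
  assert (Rabs (y - s) < d2) by (eapply Rlt_le_trans; [apply Hy | apply Rmin_r]).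
  eapply Rle_trans. apply vnorm_le_sum. simpl.
  specialize (D1 y H0). specialize (D2 y H3).
  replace (fst (c y) - fst (c s) - (y - s) * fst (c' s)) with (fst (c y) - fst (c s) - fst (c' s) * (y - s)) by ring.
  replace (snd (c y) - snd (c s) - (y - s) * snd (c' s)) with (snd (c y) - snd (c s) - snd (c' s) * (y - s)) by ring.
  lra.
Qed.

Definition ferr (H Dt Ds : R -> curve) t s t' s' : vec :=
  vsub (vsub (H t' s') (H t s)) (vadd (vscal (t' - t) (Dt t s)) (vscal (s' - s) (Ds t s))).

Lemma cyl_add H1 D1 E1 H2 D2 E2 : C1_cyl_with H1 D1 E1 -> C1_cyl_with H2 D2 E2 ->
  C1_cyl_with (fun t s => vadd (H1 t s) (H2 t s)) (fun t s => vadd (D1 t s) (D2 t s)) (fun t s => vadd (E1 t s) (E2 t s)).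
Proof.
  intros [P1 [F1 C1]] [P2 [F2 C2]]. split; [|split].
  - intros t s Ht. rewrite P1, P2; auto.
  - intros t s Ht e He. destruct (F1 t s Ht (e/2)) as [d1 [Hd1 G1]]. lra.
    destruct (F2 t s Ht (e/2)) as [d2 [Hd2 G2]]. lra.
    exists (Rmin d1 d2). split. apply Rmin_glb_lt; auto. intros t' s' Ht' Ht1 Hs1.
    assert (T1 : Rabs (t' - t) < d1) by (eapply Rlt_le_trans; [apply Ht1 | apply Rmin_l]).
    assert (T2 : Rabs (t' - t) < d2) by (eapply Rlt_le_trans; [apply Ht1 | apply Rmin_r]).
    assert (S1 : Rabs (s' - s) < d1) by (eapply Rlt_le_trans; [apply Hs1 | apply Rmin_l]).
    assert (S2 : Rabs (s' - s) < d2) by (eapply Rlt_le_trans; [apply Hs1 | apply Rmin_r]).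
    specialize (G1 t' s' Ht' T1 S1). specialize (G2 t' s' Ht' T2 S2).
    match goal with |- vnorm ?X <= _ => replace X with (vadd (ferr H1 D1 E1 t s t' s') (ferr H2 D2 E2 t s t' s')) by (unfold ferr; veq) end.
    eapply Rle_trans. apply vnorm_triangle. unfold ferr. lra.
  - intros t s Ht e He. destruct (C1 t s Ht (e/2)) as [d1 [Hd1 G1]]. lra.
    destruct (C2 t s Ht (e/2)) as [d2 [Hd2 G2]]. lra.
    exists (Rmin d1 d2). split. apply Rmin_glb_lt; auto. intros t' s' Ht' Ht1 Hs1.
    assert (T1 : Rabs (t' - t) < d1) by (eapply Rlt_le_trans; [apply Ht1 | apply Rmin_l]).
    assert (T2 : Rabs (t' - t) < d2) by (eapply Rlt_le_trans; [apply Ht1 | apply Rmin_r]).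
    assert (S1 : Rabs (s' - s) < d1) by (eapply Rlt_le_trans; [apply Hs1 | apply Rmin_l]).
    assert (S2 : Rabs (s' - s) < d2) by (eapply Rlt_le_trans; [apply Hs1 | apply Rmin_r]).
    destruct (G1 t' s' Ht' T1 S1) as [A1 B1]. destruct (G2 t' s' Ht' T2 S2) as [A2 B2].
    split.
    + replace (vsub (vadd (D1 t' s') (D2 t' s')) (vadd (D1 t s) (D2 t s))) with (vadd (vsub (D1 t' s') (D1 t s)) (vsub (D2 t' s') (D2 t s))) by veq.
      eapply Rle_trans. apply vnorm_triangle. lra.
    + replace (vsub (vadd (E1 t' s') (E2 t' s')) (vadd (E1 t s) (E2 t s))) with (vadd (vsub (E1 t' s') (E1 t s)) (vsub (E2 t' s') (E2 t s))) by veq.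
      eapply Rle_trans. apply vnorm_triangle. lra.
Qed.

Lemma cyl_scal a H1 D1 E1 : C1_cyl_with H1 D1 E1 ->
  C1_cyl_with (fun t s => vscal a (H1 t s)) (fun t s => vscal a (D1 t s)) (fun t s => vscal a (E1 t s)).
Proof.
  intros [P1 [F1 C1]]. split; [|split].
  - intros t s Ht. rewrite P1; auto.
  - intros t s Ht e He. destruct (F1 t s Ht (e / (Rabs a + 1))) as [d1 [Hd1 G1]].
    apply Rdiv_lt_0_compat; auto. pose proof (Rabs_pos a); lra.
    exists d1. split; auto. intros t' s' Ht' Ht1 Hs1. specialize (G1 t' s' Ht' Ht1 Hs1).
    match goal with |- vnorm ?X <= _ => replace X with (vscal a (ferr H1 D1 E1 t s t' s')) by (unfold ferr; veq) end.
    rewrite vnorm_scal. unfold ferr. pose proof (Rabs_pos a). pose proof (Rabs_pos (t' - t)). pose proof (Rabs_pos (s' - s)).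
    assert (Q : Rabs a * (e / (Rabs a + 1)) = e - e / (Rabs a + 1)) by (field; lra).
    assert (Q2 : 0 < e / (Rabs a + 1)) by (apply Rdiv_lt_0_compat; lra).
    pose proof (vnorm_ge0 (ferr H1 D1 E1 t s t' s')). unfold ferr in H2.
    apply Rle_trans with (Rabs a * (e / (Rabs a + 1) * (Rabs (t' - t) + Rabs (s' - s)))).
    apply Rmult_le_compat_l; auto.
    rewrite <- Rmult_assoc, Q. nra.
  - intros t s Ht e He. destruct (C1 t s Ht (e / (Rabs a + 1))) as [d1 [Hd1 G1]].
    apply Rdiv_lt_0_compat; auto. pose proof (Rabs_pos a); lra.
    exists d1. split; auto. intros t' s' Ht' Ht1 Hs1. destruct (G1 t' s' Ht' Ht1 Hs1) as [A B].
    pose proof (Rabs_pos a).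
    assert (K : forall v, vnorm v <= e / (Rabs a + 1) -> vnorm (vscal a v) <= e).
    { intros v Hv. rewrite vnorm_scal. pose proof (vnorm_ge0 v).
      apply Rle_trans with (Rabs a * (e / (Rabs a + 1))). apply Rmult_le_compat_l; auto.
      assert (Q : Rabs a * (e / (Rabs a + 1)) = e - e / (Rabs a + 1)) by (field; lra). rewrite Q. assert (0 < e / (Rabs a + 1)) by (apply Rdiv_lt_0_compat; lra). lra. }
    split.
    + replace (vsub (vscal a (D1 t' s')) (vscal a (D1 t s))) with (vscal a (vsub (D1 t' s') (D1 t s))) by veq. auto.
    + replace (vsub (vscal a (E1 t' s')) (vscal a (E1 t s))) with (vscal a (vsub (E1 t' s') (E1 t s))) by veq. auto.
Qed.

Lemma cyl_vsum N (H D E : nat -> R -> curve) : (forall j, (j <= N)%nat -> C1_cyl_with (H j) (D j) (E j)) ->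
  C1_cyl_with (fun t s => vsum N (fun j => H j t s)) (fun t s => vsum N (fun j => D j t s)) (fun t s => vsum N (fun j => E j t s)).
Proof.
  induction N; intros HH.
  - assert (E0 : forall (F : nat -> R -> curve), (fun t s => vsum 0 (fun j => F j t s)) = F 0%nat).
    { intros F. apply functional_extensionality; intros t; apply functional_extensionality; intros s. apply vsum_0. }
    rewrite !E0. apply HH; lia.
  - assert (E0 : forall (F : nat -> R -> curve), (fun t s => vsum (S N) (fun j => F j t s)) = (fun t s => vadd (vsum N (fun j => F j t s)) (F (S N) t s))).
    { intros F. apply functional_extensionality; intros t; apply functional_extensionality; intros s. apply vsum_S. }
    rewrite !E0. apply cyl_add. apply IHN; intros; apply HH; lia. apply HH; lia.
Qed.

Lemma scal_diff x y u v : vnorm (vsub (vscal x u) (vscal y v)) <= Rabs (x - y) * vnorm u + Rabs y * vnorm (vsub u v).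
Proof.
  replace (vsub (vscal x u) (vscal y v)) with (vadd (vscal (x - y) u) (vscal y (vsub u v))) by veq.
  eapply Rle_trans. apply vnorm_triangle. rewrite !vnorm_scal. lra.
Qed.

Lemma scal_cont_pair (al : R -> R) (ga : curve) t s : continuity_pt al t -> vcont ga ->
  forall e, 0 < e -> exists d, 0 < d /\ forall t' s', Rabs (t' - t) < d -> Rabs (s' - s) < d ->
    vnorm (vsub (vscal (al t') (ga s')) (vscal (al t) (ga s))) <= e.
Proof.
  intros Ha Hg e He.
  set (K := vnorm (ga s) + 1). assert (HK : 0 < K) by (unfold K; pose proof (vnorm_ge0 (ga s)); lra).
  destruct (vcont_eps ga s Hg 1) as [d1 [Hd1 D1]]. lra.
  destruct (cont_pt_eps al t Ha (e / (2 * K))) as [d2 [Hd2 D2]]. apply Rdiv_lt_0_compat; lra.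
  destruct (vcont_eps ga s Hg (e / (2 * (Rabs (al t) + 1)))) as [d3 [Hd3 D3]].
  apply Rdiv_lt_0_compat. lra. pose proof (Rabs_pos (al t)); lra.
  exists (Rmin d1 (Rmin d2 d3)). split. repeat apply Rmin_glb_lt; auto.
  intros t' s' Ht Hs.
  assert (Rabs (s' - s) < d1) by (eapply Rlt_le_trans; [apply Hs | apply Rmin_l]).
  assert (Rabs (t' - t) < d2) by (eapply Rlt_le_trans; [apply Ht | eapply Rle_trans; [apply Rmin_r | apply Rmin_l]]).
  assert (Rabs (s' - s) < d3) by (eapply Rlt_le_trans; [apply Hs | eapply Rle_trans; [apply Rmin_r | apply Rmin_r]]).
  specialize (D1 s' H). specialize (D2 t' H0). specialize (D3 s' H1).
  assert (Hn : vnorm (ga s') <= K).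
  { pose proof (vnorm_sub_tri (ga s') (ga s) (0,0)).
    replace (vsub (ga s') (0,0)) with (ga s') in H2 by (destruct (ga s'); unfold vsub; simpl; f_equal; ring).
    replace (vsub (ga s) (0,0)) with (ga s) in H2 by (destruct (ga s); unfold vsub; simpl; f_equal; ring).
    unfold K. lra. }
  eapply Rle_trans. apply scal_diff.
  pose proof (Rabs_pos (al t' - al t)). pose proof (Rabs_pos (al t)). pose proof (vnorm_ge0 (ga s')).
  pose proof (vnorm_ge0 (vsub (ga s') (ga s))).
  assert (Rabs (al t' - al t) * vnorm (ga s') <= e / 2).
  { apply Rle_trans with (e / (2 * K) * K). apply Rmult_le_compat; lra. right; field; lra. }
  assert (Rabs (al t) * vnorm (vsub (ga s') (ga s)) <= e / 2).
  { apply Rle_trans with (Rabs (al t) * (e / (2 * (Rabs (al t) + 1)))). apply Rmult_le_compat_l; lra.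
    assert (QQ : Rabs (al t) * (e / (2 * (Rabs (al t) + 1))) = e / 2 - e / (2 * (Rabs (al t) + 1))) by (field; lra).
    rewrite QQ. assert (0 < e / (2 * (Rabs (al t) + 1))) by (apply Rdiv_lt_0_compat; lra). lra. }
  lra.
Qed.

Lemma cyl_prod (a a' : R -> R) (c c' : curve) :
  (forall t, derivable_pt_lim a t (a' t)) -> (forall t, continuity_pt a' t) -> C1_curve_with c c' ->
  C1_cyl_with (fun t s => vscal (a t) (c s)) (fun t s => vscal (a' t) (c s)) (fun t s => vscal (a t) (c' s)).
Proof.
  intros Ha Ha' [Pc [Dc' Cc']].
  assert (Cc : vcont c) by (eapply deriv_vcont; eauto).
  assert (Ca : forall t, continuity_pt a t) by (intros t; apply derivable_continuous_pt; exists (a' t); apply Ha).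
  split; [|split].
  - intros t s _. rewrite Pc; auto.
  - intros t s _ e He.
    set (K := vnorm (c s) + 1). assert (HK : 0 < K) by (unfold K; pose proof (vnorm_ge0 (c s)); lra).
    set (A1 := Rabs (a' t) + 1). set (A0 := Rabs (a t) + 1).
    assert (HA1 : 0 < A1) by (unfold A1; pose proof (Rabs_pos (a' t)); lra).
    assert (HA0 : 0 < A0) by (unfold A0; pose proof (Rabs_pos (a t)); lra).
    destruct (vcont_eps c s Cc 1) as [d1 [Hd1 D1]]. lra.
    destruct (deriv_lin a t (a' t) (Ha t) (e / (3 * K))) as [d2 [Hd2 D2]]. apply Rdiv_lt_0_compat; lra.
    destruct (vcont_eps c s Cc (e / (3 * A1))) as [d3 [Hd3 D3]]. apply Rdiv_lt_0_compat; lra.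
    destruct (vderiv_lin c c' s Dc' (e / (3 * A0))) as [d4 [Hd4 D4]]. apply Rdiv_lt_0_compat; lra.
    exists (Rmin (Rmin d1 d2) (Rmin d3 d4)). split. repeat apply Rmin_glb_lt; auto.
    intros t' s' _ Ht Hs.
    pose proof (Rmin_l (Rmin d1 d2) (Rmin d3 d4)). pose proof (Rmin_r (Rmin d1 d2) (Rmin d3 d4)).
    pose proof (Rmin_l d1 d2). pose proof (Rmin_r d1 d2). pose proof (Rmin_l d3 d4). pose proof (Rmin_r d3 d4).
    specialize (D1 s' ltac:(lra)). specialize (D2 t' ltac:(lra)). specialize (D3 s' ltac:(lra)). specialize (D4 s' ltac:(lra)).
    clear H H0 H1 H2 H3 H4.
    assert (Hn : vnorm (c s') <= K).
    { pose proof (vnorm_sub_tri (c s') (c s) (0,0)).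
      replace (vsub (c s') (0,0)) with (c s') in H by (destruct (c s'); unfold vsub; simpl; f_equal; ring).
      replace (vsub (c s) (0,0)) with (c s) in H by (destruct (c s); unfold vsub; simpl; f_equal; ring).
      unfold K. lra. }
    set (AA := a t' - a t - a' t * (t' - t)).
    match goal with |- vnorm ?X <= _ => replace X with
      (vadd (vadd (vscal AA (c s')) (vscal (a' t * (t' - t)) (vsub (c s') (c s))))
            (vscal (a t) (vsub (vsub (c s') (c s)) (vscal (s' - s) (c' s))))) by (unfold AA; veq) end.
    eapply Rle_trans. apply vnorm_triangle. eapply Rle_trans. apply Rplus_le_compat_r. apply vnorm_triangle.
    rewrite !vnorm_scal.
    pose proof (Rabs_pos AA). pose proof (vnorm_ge0 (c s')). pose proof (Rabs_pos (t' - t)). pose proof (Rabs_pos (s' - s)).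
    pose proof (Rabs_pos (a t)). pose proof (Rabs_pos (a' t)).
    pose proof (vnorm_ge0 (vsub (c s') (c s))). pose proof (vnorm_ge0 (vsub (vsub (c s') (c s)) (vscal (s' - s) (c' s)))).
    assert (Q1 : Rabs AA * vnorm (c s') <= e / 3 * Rabs (t' - t)).
    { apply Rle_trans with (e / (3 * K) * Rabs (t' - t) * K). apply Rmult_le_compat; auto.
      right; field; lra. }
    assert (Q2 : Rabs (a' t * (t' - t)) * vnorm (vsub (c s') (c s)) <= e / 3 * Rabs (t' - t)).
    { rewrite Rabs_mult. apply Rle_trans with (A1 * Rabs (t' - t) * (e / (3 * A1))).
      apply Rmult_le_compat. apply Rmult_le_pos; auto. auto. apply Rmult_le_compat_r; auto. unfold A1; lra. auto.
      right; field; lra. }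
    assert (Q3 : Rabs (a t) * vnorm (vsub (vsub (c s') (c s)) (vscal (s' - s) (c' s))) <= e / 3 * Rabs (s' - s)).
    { apply Rle_trans with (A0 * (e / (3 * A0) * Rabs (s' - s))).
      apply Rmult_le_compat; auto. unfold A0; lra. right; field; lra. }
    assert (0 <= e * Rabs (t' - t)) by (apply Rmult_le_pos; lra). assert (0 <= e * Rabs (s' - s)) by (apply Rmult_le_pos; lra). lra.
  - intros t s _ e He.
    destruct (scal_cont_pair a' c t s (Ha' t) Cc e He) as [d1 [Hd1 D1]].
    destruct (scal_cont_pair a c' t s (Ca t) Cc' e He) as [d2 [Hd2 D2]].
    exists (Rmin d1 d2). split. apply Rmin_glb_lt; auto. intros t' s' _ Ht Hs.
    pose proof (Rmin_l d1 d2). pose proof (Rmin_r d1 d2). split.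
    apply D1; lra. apply D2; lra.
Qed.


Lemma vnorm_sub_le u v : vnorm (vsub u v) <= vnorm u + vnorm v.
Proof.
  replace (vsub u v) with (vadd u (vscal (-1) v)) by veq.
  eapply Rle_trans. apply vnorm_triangle. rewrite vnorm_scal.
  replace (Rabs (-1)) with 1 by (rewrite Rabs_left; lra). lra.
Qed.

Lemma frechet_unique (H : R -> curve) t s a b a' b' : I01 t ->
  (forall e, 0 < e -> exists d, 0 < d /\ forall t' s', I01 t' -> Rabs (t' - t) < d -> Rabs (s' - s) < d ->
     vnorm (vsub (vsub (H t' s') (H t s)) (vadd (vscal (t' - t) a) (vscal (s' - s) b))) <= e * (Rabs (t' - t) + Rabs (s' - s))) ->
  (forall e, 0 < e -> exists d, 0 < d /\ forall t' s', I01 t' -> Rabs (t' - t) < d -> Rabs (s' - s) < d ->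
     vnorm (vsub (vsub (H t' s') (H t s)) (vadd (vscal (t' - t) a') (vscal (s' - s) b'))) <= e * (Rabs (t' - t) + Rabs (s' - s))) ->
  a = a' /\ b = b'.
Proof.
  intros Ht F1 F2.
  assert (K : forall e, 0 < e -> exists d, 0 < d /\ forall t' s', I01 t' -> Rabs (t' - t) < d -> Rabs (s' - s) < d ->
     vnorm (vadd (vscal (t' - t) (vsub a' a)) (vscal (s' - s) (vsub b' b))) <= 2 * e * (Rabs (t' - t) + Rabs (s' - s))).
  { intros e He. destruct (F1 e He) as [d1 [Hd1 G1]]. destruct (F2 e He) as [d2 [Hd2 G2]].
    exists (Rmin d1 d2). split. apply Rmin_glb_lt; auto. intros t' s' Ht' T S.
    pose proof (Rmin_l d1 d2). pose proof (Rmin_r d1 d2).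
    specialize (G1 t' s' Ht' ltac:(lra) ltac:(lra)). specialize (G2 t' s' Ht' ltac:(lra) ltac:(lra)).
    match goal with G1 : vnorm ?X <= _, G2 : vnorm ?Y <= _ |- vnorm ?Z <= _ =>
      replace Z with (vsub X Y) by veq end.
    eapply Rle_trans. apply vnorm_sub_le.
    lra. }
  split.
  - assert (vsub a' a = (0,0)).
    { apply vnorm_small_zero. intros e He. destruct (K (e / 2)) as [d [Hd G]]. lra.
      set (dd := Rmin (d / 2) (1 / 2)). assert (Hdd : 0 < dd) by (apply Rmin_glb_lt; lra).
      assert (dd <= d / 2) by apply Rmin_l. assert (dd <= 1 / 2) by apply Rmin_r.
      destruct Ht as [Ht0 Ht1]. destruct (Rle_dec t (1/2)).
      + specialize (G (t + dd) s ltac:(unfold I01; lra)).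
        replace (t + dd - t) with dd in G by ring. replace (s - s) with 0 in G by ring.
        rewrite Rabs_R0, (Rabs_right dd) in G by lra. specialize (G ltac:(lra) ltac:(lra)).
        replace (vadd (vscal dd (vsub a' a)) (vscal 0 (vsub b' b))) with (vscal dd (vsub a' a)) in G by veq.
        rewrite vnorm_scal, Rabs_right in G by lra.
        apply Rmult_le_reg_l with dd; auto. nra.
      + specialize (G (t - dd) s ltac:(unfold I01; lra)).
        replace (t - dd - t) with (- dd) in G by ring. replace (s - s) with 0 in G by ring.
        rewrite Rabs_R0, Rabs_Ropp, (Rabs_right dd) in G by lra. specialize (G ltac:(lra) ltac:(lra)).
        replace (vadd (vscal (- dd) (vsub a' a)) (vscal 0 (vsub b' b))) with (vscal (- dd) (vsub a' a)) in G by veq.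
        rewrite vnorm_scal, Rabs_Ropp, Rabs_right in G by lra.
        apply Rmult_le_reg_l with dd; auto. nra. }
    destruct a, a'; unfold vsub in H0; simpl in H0; inversion H0. f_equal; lra.
  - assert (vsub b' b = (0,0)).
    { apply vnorm_small_zero. intros e He. destruct (K (e / 2)) as [d [Hd G]]. lra.
      specialize (G t (s + d / 2) Ht).
      replace (t - t) with 0 in G by ring. replace (s + d / 2 - s) with (d / 2) in G by ring.
      rewrite Rabs_R0, (Rabs_right (d/2)) in G by lra. specialize (G ltac:(lra) ltac:(lra)).
      replace (vadd (vscal 0 (vsub a' a)) (vscal (d / 2) (vsub b' b))) with (vscal (d / 2) (vsub b' b)) in G by veq.
      rewrite vnorm_scal, Rabs_right in G by lra.
      apply Rmult_le_reg_l with (d / 2). lra. nra. }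
    destruct b, b'; unfold vsub in H0; simpl in H0; inversion H0. f_equal; lra.
Qed.

Lemma cyl_periodic_derivs H Dt Ds : C1_cyl_with H Dt Ds -> forall t s, I01 t ->
  Dt t (s + 1) = Dt t s /\ Ds t (s + 1) = Ds t s.
Proof.
  intros [P [F _]] t s Ht.
  destruct (frechet_unique H t s (Dt t (s + 1)) (Ds t (s + 1)) (Dt t s) (Ds t s) Ht); auto.
  intros e He. destruct (F t (s + 1) Ht e He) as [d [Hd G]]. exists d; split; auto.
  intros t' s' Ht' T S. specialize (G t' (s' + 1) Ht' T).
  replace (s' + 1 - (s + 1)) with (s' - s) in G by ring. rewrite !P in G; auto.
Qed.

Lemma upper2P a b a' b' (Q : R -> R -> R -> Prop) :
  (forall x y M M', M <= M' -> Q x y M -> Q x y M') ->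
  (forall u v, box a b a' b' u v -> exists r, 0 < r /\ exists M,
     forall x y, box a b a' b' x y -> Rabs (x - u) < r -> Rabs (y - v) < r -> Q x y M) ->
  exists M, forall x y, box a b a' b' x y -> Q x y M.
Proof.
  intros Mono H.
  destruct (cover2 a b a' b' _ H) as [l [_ Hl]].
  assert (G : exists M, forall u v r, In (u, v, r) l -> box a b a' b' u v ->
     (exists M, forall x y, box a b a' b' x y -> Rabs (x - u) < r -> Rabs (y - v) < r -> Q x y M) ->
     forall x y, box a b a' b' x y -> Rabs (x - u) < r -> Rabs (y - v) < r -> Q x y M).
  { clear Hl. induction l as [|[[u v] r] l IH].
    - exists 0. intros ? ? ? [].
    - destruct IH as [M IH].
      destruct (classic (box a b a' b' u v /\ exists M, forall x y, box a b a' b' x y -> Rabs (x - u) < r -> Rabs (y - v) < r -> Q x y M)) as [[Hb [M' Hf]] | Hn].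
      + exists (Rmax M M').
        intros u0 v0 r0 [E | Hin] Hb0 Hex x y Hbx Hx Hy.
        * inversion E; subst. eapply Mono. apply Rmax_r. apply Hf; auto.
        * eapply Mono. apply Rmax_l. eapply IH; eauto.
      + exists M. intros u0 v0 r0 [E | Hin] Hb0 Hex x y Hbx Hx Hy.
        * inversion E; subst. exfalso; apply Hn; auto.
        * eapply IH; eauto. }
  destruct G as [M G]. exists M.
  intros x y Hb. destruct (Hl x y Hb) as [u [v [r [Hin [Hbu [Hr [HP [Hx Hy]]]]]]]].
  eapply G; eauto.
Qed.

Lemma close_to_Cl n f g e : in_I n f -> in_I n g -> C1_close f g e -> Cl g (Dc g) e f.
Proof.
  intros Hf Hg [f' [g' [Df [Dg B]]]].
  destruct (in_I_Dc n f Hf) as [Cf [_ [_ [Hf0 _]]]].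
  rewrite (Dc_eq g g' Dg). split; [|split]; auto. rewrite (Dc_eq f f' Df). auto.
Qed.

Definition wt (N : nat) (x : R) (j : nat) : R := Bf (INR N * x - INR j).

Lemma wt_nonneg N x j : 0 <= wt N x j.
Proof. apply Bf_range. Qed.

Lemma wt_sum N x : (0 < N)%nat -> 0 <= x <= 1 -> sum_f_R0 (wt N x) N = 1.
Proof.
  intros HN Hx. unfold wt. apply pou. apply lt_INR in HN. simpl in HN. split; nra.
Qed.

Lemma wt_pos N x j : (0 < N)%nat -> 0 < wt N x j -> Rabs (INR j / INR N - x) < 1 / INR N.
Proof.
  intros HN H. apply Bf_pos_in in H. apply lt_INR in HN. simpl in HN.
  replace (INR j / INR N - x) with (- (INR N * x - INR j) / INR N) by (field; lra).
  unfold Rdiv. rewrite Rabs_mult, Rabs_Ropp, (Rabs_right (/ INR N)) by (apply Rle_ge; left; apply Rinv_0_lt_compat; lra).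
  apply Rmult_lt_compat_r. apply Rinv_0_lt_compat; lra. lra.
Qed.

Lemma grid_I01 N j : (0 < N)%nat -> (j <= N)%nat -> I01 (INR j / INR N).
Proof.
  intros HN Hj. apply lt_INR in HN. apply le_INR in Hj. simpl in HN. pose proof (pos_INR j). split.
  apply Rmult_le_pos; [lra | left; apply Rinv_0_lt_compat; lra]. apply Rmult_le_reg_r with (INR N). lra.
  unfold Rdiv. rewrite Rmult_assoc, Rinv_l by lra. lra.
Qed.

Lemma vsum_single N (w : nat -> R) (v : nat -> vec) : w 0%nat = 1 -> (forall i, (0 < i)%nat -> w i = 0) ->
  vsum N (fun i => vscal (w i) (v i)) = v 0%nat.
Proof.
  intros H0 H1. induction N. rewrite vsum_0, H0. destruct (v 0%nat); unfold vscal; simpl; f_equal; ring.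
  rewrite vsum_S, IHN, H1 by lia. destruct (v 0%nat); destruct (v (S N)); unfold vscal, vadd; simpl; f_equal; ring.
Qed.

Lemma vsum_wdiff N (w1 w2 : nat -> R) (v : nat -> vec) M :
  (forall i, (i <= N)%nat -> vnorm (v i) <= M) ->
  vnorm (vsub (vsum N (fun i => vscal (w1 i) (v i))) (vsum N (fun i => vscal (w2 i) (v i)))) <=
  sum_f_R0 (fun i => Rabs (w1 i - w2 i)) N * M.
Proof.
  intros HM. rewrite vsum_sub. eapply Rle_trans. apply vnorm_vsum_le.
  rewrite <- sum_const_mul. apply sum_le_gen. intros i Hi.
  replace (vsub (vscal (w1 i) (v i)) (vscal (w2 i) (v i))) with (vscal (w1 i - w2 i) (v i)) by veq.
  rewrite vnorm_scal. apply Rmult_le_compat_l. apply Rabs_pos. auto.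
Qed.

Lemma sum_le_const N (f : nat -> R) c : (forall i, (i <= N)%nat -> f i <= c) -> sum_f_R0 f N <= INR (S N) * c.
Proof.
  induction N; intros H. simpl. specialize (H 0%nat (le_n _)). lra.
  rewrite tech5, S_INR. pose proof (IHN (fun i Hi => H i (le_S _ _ Hi))). pose proof (H (S N) (le_n _)). lra.
Qed.

Lemma exists_N rho : 0 < rho -> exists N, (0 < N)%nat /\ 1 / INR N < rho.
Proof.
  intros H. destruct (archimed (/ rho)) as [H1 _].
  exists (S (Z.abs_nat (up (/ rho)))). split. lia.
  assert (INR (S (Z.abs_nat (up (/ rho)))) > / rho).
  { rewrite S_INR. rewrite INR_IZR_INZ. rewrite Zabs2Nat.id_abs.
    pose proof (Rle_abs (IZR (up (/ rho)))). rewrite abs_IZR. lra. }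
  pose proof (Rinv_0_lt_compat rho H).
  apply Rmult_lt_reg_r with (INR (S (Z.abs_nat (up (/ rho))))). lra.
  unfold Rdiv. rewrite Rmult_assoc, Rinv_l by lra.
  assert (rho * / rho = 1) by (field; lra). nra.
Qed.


Definition grid (ht : R -> R -> curve) N i j : curve := ht (INR i / INR N) (INR j / INR N).
Definition Rrow N (gam : R -> curve) ht (i : nat) (t : R) : curve :=
  match i with O => gam t | S _ => comb N (wt N t) (grid ht N i) end.
Definition RrowDt N (Dtg : R -> curve) ht (i : nat) (t : R) : curve :=
  match i with O => Dtg t | S _ => fun s => vsum N (fun j => vscal (dBf (INR N * t - INR j) * INR N) (grid ht N i j s)) end.
Definition RrowDs N (Dsg : R -> curve) ht (i : nat) (t : R) : curve :=
  match i with O => Dsg t | S _ => comb N (wt N t) (fun j => Dc (grid ht N i j)) end.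
Definition hdef N gam ht z t : curve := comb N (wt N z) (fun i => Rrow N gam ht i t).
Definition hDt N Dtg ht z t : curve := fun s => vsum N (fun i => vscal (wt N z i) (RrowDt N Dtg ht i t s)).
Definition hDs N Dsg ht z t : curve := fun s => vsum N (fun i => vscal (wt N z i) (RrowDs N Dsg ht i t s)).

Lemma lin_deriv c d t : derivable_pt_lim (fun x => c * x - d) t c.
Proof.
  assert (H : derivable_pt_lim (fun x => c * x - d) t (c * 1 - 0)).
  { apply (derivable_pt_lim_minus (fun x => c * x) (fun _ => d)).
    apply (derivable_pt_lim_scal id). apply derivable_pt_lim_id. apply derivable_pt_lim_const. }
  replace (c * 1 - 0) with c in H by ring. exact H.
Qed.

Lemma wt_deriv N j t : derivable_pt_lim (fun x => wt N x j) t (dBf (INR N * t - INR j) * INR N).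
Proof.
  unfold wt. apply (derivable_pt_lim_comp (fun x => INR N * x - INR j) Bf). apply lin_deriv. apply Bf_deriv.
Qed.

Lemma dwt_cont N j t : continuity_pt (fun x => dBf (INR N * x - INR j) * INR N) t.
Proof.
  apply (continuity_pt_mult (fun x => dBf (INR N * x - INR j)) (fun _ => INR N)).
  apply (continuity_pt_comp (fun x => INR N * x - INR j) dBf). apply derivable_continuous_pt.
  exists (INR N); apply lin_deriv. apply dBf_cont. apply continuity_pt_const; intros a b; auto.
Qed.

Lemma Rrow_cyl N gam Dtg Dsg ht : C1_cyl_with gam Dtg Dsg ->
  (forall i j, (i <= N)%nat -> (j <= N)%nat -> C1_curve_with (grid ht N i j) (Dc (grid ht N i j))) ->
  forall i, (i <= N)%nat -> C1_cyl_with (Rrow N gam ht i) (RrowDt N Dtg ht i) (RrowDs N Dsg ht i).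
Proof.
  intros Hg Hgr i Hi. destruct i as [|i']. simpl; auto.
  apply (cyl_vsum N (fun j t s => vscal (wt N t j) (grid ht N (S i') j s))
                    (fun j t s => vscal (dBf (INR N * t - INR j) * INR N) (grid ht N (S i') j s))
                    (fun j t s => vscal (wt N t j) (Dc (grid ht N (S i') j) s))).
  intros j Hj. apply (cyl_prod (fun t => wt N t j) (fun t => dBf (INR N * t - INR j) * INR N)).
  intros t; apply wt_deriv. intros t; apply dwt_cont. apply Hgr; auto.
Qed.

Lemma h_cyl N gam Dtg Dsg ht z : C1_cyl_with gam Dtg Dsg ->
  (forall i j, (i <= N)%nat -> (j <= N)%nat -> C1_curve_with (grid ht N i j) (Dc (grid ht N i j))) ->
  C1_cyl_with (hdef N gam ht z) (hDt N Dtg ht z) (hDs N Dsg ht z).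
Proof.
  intros Hg Hgr.
  apply (cyl_vsum N (fun i t s => vscal (wt N z i) (Rrow N gam ht i t s))
                    (fun i t s => vscal (wt N z i) (RrowDt N Dtg ht i t s))
                    (fun i t s => vscal (wt N z i) (RrowDs N Dsg ht i t s))).
  intros i Hi. apply cyl_scal. apply Rrow_cyl; auto.
Qed.

Lemma h_zero N gam ht t : hdef N gam ht 0 t = gam t.
Proof.
  apply functional_extensionality; intros s. unfold hdef, comb.
  rewrite (vsum_single N (wt N 0) (fun i => Rrow N gam ht i t s)). reflexivity.
  unfold wt. rewrite Rmult_0_r, Rminus_0_r, Bf_0; auto.
  intros i Hi. unfold wt. apply Bf_out. rewrite Rmult_0_r, Rminus_0_l, Rabs_Ropp.
  destruct i. lia. rewrite S_INR. pose proof (pos_INR i). rewrite Rabs_right; lra.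
Qed.

Lemma C1_Dc f f' : C1_curve_with f f' -> C1_curve_with f (Dc f).
Proof. intros H. rewrite (Dc_eq f f'); auto. destruct H as [_ [H _]]; auto. Qed.

Lemma h_Cl n N gam ht z t g g' e : (0 < N)%nat ->
  (forall t, I01 t -> ht 0 t = gam t) ->
  (forall z t, I01 z -> I01 t -> in_I n (ht z t)) ->
  I01 z -> I01 t ->
  (forall z' t', I01 z' -> I01 t' -> Rabs (z' - z) < 1 / INR N -> Rabs (t' - t) < 1 / INR N -> Cl g g' e (ht z' t')) ->
  Cl g g' e (hdef N gam ht z t).
Proof.
  intros HN H0 HI Hz Ht HCl.
  assert (Cgr : forall i j, (i <= N)%nat -> (j <= N)%nat -> C1_curve_with (grid ht N i j) (Dc (grid ht N i j))).
  { intros i j Hi Hj. unfold grid. apply (in_I_Dc n). apply HI; apply grid_I01; auto. }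
  unfold hdef. apply Cl_comb.
  - intros; apply wt_nonneg.
  - apply wt_sum; auto.
  - intros i Hi. destruct i as [|i'].
    + simpl. rewrite <- H0 by auto. apply (in_I_Dc n). apply HI; auto. split; lra.
    + simpl. apply C1_Dc with (comb N (wt N t) (fun j => Dc (grid ht N (S i') j))). apply comb_C1.
      intros j Hj; apply Cgr; auto.
  - intros i Hi Hw. pose proof (wt_pos N z i HN Hw) as Hzi. destruct i as [|i'].
    + simpl. rewrite <- H0 by auto. apply HCl; auto. split; lra.
      simpl in Hzi. replace (0 / INR N) with 0 in Hzi by (unfold Rdiv; ring). auto.
      rewrite Rminus_diag, Rabs_R0. apply Rdiv_lt_0_compat. lra. apply lt_0_INR; lia.
    + simpl. apply Cl_comb.
      * intros; apply wt_nonneg.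
      * apply wt_sum; auto.
      * intros j Hj. apply Cgr; auto.
      * intros j Hj Hwj. pose proof (wt_pos N t j HN Hwj). unfold grid. apply HCl; auto; apply grid_I01; auto.
Qed.


Lemma row_bounds N gam Dtg Dsg ht Mg Mh : 0 <= Mh ->
  (forall t s, I01 t -> vnorm (gam t s) <= Mg /\ vnorm (Dtg t s) <= Mg /\ vnorm (Dsg t s) <= Mg) ->
  (forall z t s, I01 z -> I01 t -> vnorm (ht z t s) <= Mh /\ vnorm (Dc (ht z t) s) <= Mh) ->
  (0 < N)%nat ->
  forall i t s, (i <= N)%nat -> I01 t ->
   vnorm (Rrow N gam ht i t s) <= Rmax Mg (INR (S N) * (2 * INR N + 1) * Mh) /\
   vnorm (RrowDt N Dtg ht i t s) <= Rmax Mg (INR (S N) * (2 * INR N + 1) * Mh) /\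
   vnorm (RrowDs N Dsg ht i t s) <= Rmax Mg (INR (S N) * (2 * INR N + 1) * Mh).
Proof.
  intros HMh Hg Hh HN i t s Hi Ht.
  set (M2 := INR (S N) * (2 * INR N + 1) * Mh).
  destruct i as [|i'].
  - simpl. destruct (Hg t s Ht) as [A [B C]]. pose proof (Rmax_l Mg M2). repeat split; lra.
  - pose proof (Rmax_r Mg M2).
    assert (HNp : 0 < INR N) by (apply lt_0_INR; auto).
    assert (Hgr : forall j, (j <= N)%nat -> vnorm (grid ht N (S i') j s) <= Mh /\ vnorm (Dc (grid ht N (S i') j) s) <= Mh).
    { intros j Hj. unfold grid. apply Hh; apply grid_I01; auto. }
    assert (K : forall (c : nat -> R) (v : nat -> vec) B, (forall j, (j <= N)%nat -> Rabs (c j) <= B) -> 0 <= B ->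
      (forall j, (j <= N)%nat -> vnorm (v j) <= Mh) -> vnorm (vsum N (fun j => vscal (c j) (v j))) <= INR (S N) * (B * Mh)).
    { intros c v B Hc HB Hv. eapply Rle_trans. apply vnorm_vsum_le. apply sum_le_const.
      intros j Hj. rewrite vnorm_scal. apply Rmult_le_compat; auto. apply Rabs_pos. apply vnorm_ge0. }
    assert (Hw : forall j, Rabs (wt N t j) <= 1) by (intros j; pose proof (Bf_range (INR N * t - INR j)); unfold wt; rewrite Rabs_right; lra).
    assert (INR (S N) * (1 * Mh) <= M2).
    { unfold M2. pose proof (pos_INR (S N)).
      replace (INR (S N) * (1 * Mh)) with (INR (S N) * Mh * 1) by ring.
      replace (INR (S N) * (2 * INR N + 1) * Mh) with (INR (S N) * Mh * (2 * INR N + 1)) by ring.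
      apply Rmult_le_compat_l. nra. lra. }
    assert (INR (S N) * ((2 * INR N) * Mh) <= M2).
    { unfold M2. pose proof (pos_INR (S N)).
      replace (INR (S N) * ((2 * INR N) * Mh)) with (INR (S N) * Mh * (2 * INR N)) by ring.
      replace (INR (S N) * (2 * INR N + 1) * Mh) with (INR (S N) * Mh * (2 * INR N + 1)) by ring.
      apply Rmult_le_compat_l. nra. lra. }
    simpl. repeat split.
    + unfold comb. eapply Rle_trans. apply (K (wt N t) (fun j => grid ht N (S i') j s) 1); auto. lra. intros; apply Hgr; auto. lra.
    + eapply Rle_trans. apply (K (fun j => dBf (INR N * t - INR j) * INR N) (fun j => grid ht N (S i') j s) (2 * INR N)); auto.
      intros j Hj. rewrite Rabs_mult, (Rabs_right (INR N)) by lra. pose proof (dBf_bound (INR N * t - INR j)).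
      apply Rmult_le_compat_r; lra. lra. intros; apply Hgr; auto. lra.
    + unfold comb. eapply Rle_trans. apply (K (wt N t) (fun j => Dc (grid ht N (S i') j) s) 1); auto. lra. intros; apply Hgr; auto. lra.
Qed.

Lemma wt_lip N z z0 i : Rabs (wt N z i - wt N z0 i) <= 2 * INR N * Rabs (z - z0).
Proof.
  unfold wt. eapply Rle_trans. apply Bf_lip.
  replace (INR N * z - INR i - (INR N * z0 - INR i)) with (INR N * (z - z0)) by ring.
  rewrite Rabs_mult, (Rabs_right (INR N)) by (apply Rle_ge, pos_INR). lra.
Qed.

Lemma zcont_bound N (v1 : nat -> vec) z z0 M : 0 <= M -> (forall i, (i <= N)%nat -> vnorm (v1 i) <= M) ->
  vnorm (vsub (vsum N (fun i => vscal (wt N z i) (v1 i))) (vsum N (fun i => vscal (wt N z0 i) (v1 i)))) <=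
  INR (S N) * (2 * INR N * Rabs (z - z0)) * M.
Proof.
  intros HM H. eapply Rle_trans. apply vsum_wdiff. exact H.
  apply Rmult_le_compat_r; auto. apply sum_le_const. intros; apply wt_lip.
Qed.

Lemma h_zcont N gam Dtg Dsg ht M : 0 <= M ->
  (forall i t s, (i <= N)%nat -> I01 t ->
   vnorm (Rrow N gam ht i t s) <= M /\ vnorm (RrowDt N Dtg ht i t s) <= M /\ vnorm (RrowDs N Dsg ht i t s) <= M) ->
  forall z0, I01 z0 -> forall eps, 0 < eps -> exists delta, 0 < delta /\
    forall z, I01 z -> Rabs (z - z0) < delta -> forall t s, I01 t ->
      vnorm (vsub (hdef N gam ht z t s) (hdef N gam ht z0 t s)) <= eps /\
      vnorm (vsub (hDt N Dtg ht z t s) (hDt N Dtg ht z0 t s)) <= eps /\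
      vnorm (vsub (hDs N Dsg ht z t s) (hDs N Dsg ht z0 t s)) <= eps.
Proof.
  intros HM HB z0 _ eps He.
  set (K := INR (S N) * (2 * INR N) * M + 1).
  assert (HK : 0 < K) by (unfold K; pose proof (pos_INR (S N)); pose proof (pos_INR N); assert (0 <= INR (S N) * (2 * INR N) * M) by (repeat apply Rmult_le_pos; lra); lra).
  exists (eps / K). split. apply Rdiv_lt_0_compat; lra.
  intros z _ Hz t s Ht.
  assert (Q : INR (S N) * (2 * INR N * Rabs (z - z0)) * M <= eps).
  { replace (INR (S N) * (2 * INR N * Rabs (z - z0)) * M) with ((INR (S N) * (2 * INR N) * M) * Rabs (z - z0)) by ring.
    apply Rle_trans with (K * Rabs (z - z0)). apply Rmult_le_compat_r. apply Rabs_pos. unfold K; lra.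
    apply Rle_trans with (K * (eps / K)). apply Rmult_le_compat_l; lra. right; field; lra. }
  repeat split; eapply Rle_trans; try apply Q.
  - unfold hdef, comb. apply zcont_bound; auto. intros i Hi; apply HB; auto.
  - unfold hDt. apply zcont_bound; auto. intros i Hi; apply HB; auto.
  - unfold hDs. apply zcont_bound; auto. intros i Hi; apply HB; auto.
Qed.


Lemma tri_lt a b c x y : Rabs (a - b) < x -> Rabs (b - c) < y -> Rabs (a - c) < x + y.
Proof.
  intros H1 H2. replace (a - c) with ((a - b) + (b - c)) by ring.
  eapply Rle_lt_trans. apply Rabs_triang. lra.
Qed.

Lemma Cl_bound g g' e f s : Cl g g' e f -> vnorm (f s) <= vnorm (g s) + e /\ vnorm (Dc f s) <= vnorm (g' s) + e.
Proof.
  intros [_ [_ H]]. destruct (H s) as [A B].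
  pose proof (vnorm_sub_tri (f s) (g s) (0,0)). pose proof (vnorm_sub_tri (Dc f s) (g' s) (0,0)).
  replace (vsub (f s) (0,0)) with (f s) in H0 by veq. replace (vsub (g s) (0,0)) with (g s) in H0 by veq.
  replace (vsub (Dc f s) (0,0)) with (Dc f s) in H1 by veq. replace (vsub (g' s) (0,0)) with (g' s) in H1 by veq.
  split; lra.
Qed.

Theorem mainTheorem4 (n : Z) (gam : R -> curve) (ht : R -> R -> curve)
  (Hgam : path_in_I n gam)
  (Hht : square_map_in_I n ht)
  (Hht0 : forall t, I01 t -> ht 0 t = gam t)
  (Hi : C1_cyl gam)
  (Hii : forall t, I01 t -> is_embedding (ht 1 t))
  (Hiii : forall z, I01 z -> is_embedding (ht z 0) /\ is_embedding (ht z 1)) :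
  exists h : R -> R -> curve,
    (forall z t, I01 z -> I01 t -> in_I n (h z t)) /\
    (forall t, I01 t -> h 0 t = gam t) /\
    (exists Dt Ds : R -> R -> curve,
       (forall z, I01 z -> C1_cyl_with (h z) (Dt z) (Ds z)) /\
       (forall z0, I01 z0 -> forall eps, 0 < eps -> exists delta, 0 < delta /\
          forall z, I01 z -> Rabs (z - z0) < delta ->
            forall t s, I01 t ->
              vnorm (vsub (h z t s) (h z0 t s)) <= eps /\
              vnorm (vsub (Dt z t s) (Dt z0 t s)) <= eps /\
              vnorm (vsub (Ds z t s) (Ds z0 t s)) <= eps)) /\
    (forall t, I01 t -> is_embedding (h 1 t)) /\
    (forall z, I01 z -> is_embedding (h z 0) /\ is_embedding (h z 1)).
Proof.
  destruct Hi as [Dtg [Dsg HC]].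
  destruct Hht as [HI Hcont].
  assert (I01_1 : I01 1) by (split; lra). assert (I01_0 : I01 0) by (split; lra).
  assert (Loc : forall u v e, I01 u -> I01 v -> 0 < e -> exists r, 0 < r /\ forall z' t', I01 z' -> I01 t' ->
            Rabs (z' - u) < r -> Rabs (t' - v) < r -> Cl (ht u v) (Dc (ht u v)) e (ht z' t')).
  { intros u v e Hu Hv He. destruct (Hcont u v Hu Hv e He) as [d [Hd G]]. exists d; split; auto.
    intros z' t' Hz Ht Hz' Ht'. apply (close_to_Cl n); auto. }
  destruct (upper2P 0 1 0 1 (fun z t M => forall s, vnorm (ht z t s) <= M /\ vnorm (Dc (ht z t) s) <= M)) as [Mh0 HMh0].
  { intros x y M M' HMM H s. destruct (H s); split; lra. }
  { intros u v [Hu Hv]. destruct (Loc u v 1 Hu Hv ltac:(lra)) as [r [Hr G]]. exists r; split; auto.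
    destruct (in_I_Dc n (ht u v) (HI u v Hu Hv)) as [[P [D C]] _].
    destruct (per_curve_bounded (ht u v) P (deriv_vcont _ _ D)) as [M1 HM1].
    destruct (per_curve_bounded (Dc (ht u v)) (deriv_periodic _ _ P D) C) as [M2 HM2].
    exists (Rmax M1 M2 + 1). intros x y [Hx Hy] Hxu Hyv s.
    destruct (Cl_bound _ _ _ _ s (G x y Hx Hy Hxu Hyv)).
    pose proof (HM1 s); pose proof (HM2 s); pose proof (Rmax_l M1 M2); pose proof (Rmax_r M1 M2). split; lra. }
  set (Mh := Rabs Mh0).
  assert (HMh : forall z t s, I01 z -> I01 t -> vnorm (ht z t s) <= Mh /\ vnorm (Dc (ht z t) s) <= Mh).
  { intros z t s Hz Ht. destruct (HMh0 z t (conj Hz Ht) s). pose proof (Rle_abs Mh0). unfold Mh; split; lra. }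
  destruct HC as [HCP [HCF HCC]] eqn:EHC.
  destruct (upper2P 0 1 0 1 (fun t s M => vnorm (gam t s) <= M /\ vnorm (Dtg t s) <= M /\ vnorm (Dsg t s) <= M)) as [Mg HMg0].
  { intros x y M M' HMM [A [B C]]. repeat split; lra. }
  { intros u v [Hu Hv]. destruct (HCC u v Hu 1 ltac:(lra)) as [d1 [Hd1 G1]].
    destruct (HCF u v Hu 1 ltac:(lra)) as [d2 [Hd2 G2]].
    exists (Rmin 1 (Rmin d1 d2)). split. repeat apply Rmin_glb_lt; lra.
    exists (vnorm (gam u v) + vnorm (Dtg u v) + vnorm (Dsg u v) + 3).
    intros x y [Hx Hy] Hxu Hyv.
    pose proof (Rmin_l 1 (Rmin d1 d2)). pose proof (Rmin_r 1 (Rmin d1 d2)). pose proof (Rmin_l d1 d2). pose proof (Rmin_r d1 d2).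
    destruct (G1 x y Hx ltac:(lra) ltac:(lra)) as [A B].
    specialize (G2 x y Hx ltac:(lra) ltac:(lra)).
    pose proof (vnorm_ge0 (gam u v)). pose proof (vnorm_ge0 (Dtg u v)). pose proof (vnorm_ge0 (Dsg u v)).
    assert (Tg : forall a b, vnorm a <= vnorm b + vnorm (vsub a b)).
    { intros a b. pose proof (vnorm_sub_tri a b (0,0)). replace (vsub a (0,0)) with a in H6 by veq.
      replace (vsub b (0,0)) with b in H6 by veq. lra. }
    repeat split.
    - pose proof (Tg (gam x y) (gam u v)).
      set (L := vadd (vscal (x - u) (Dtg u v)) (vscal (y - v) (Dsg u v))) in *.
      assert (vnorm (vsub (gam x y) (gam u v)) <= vnorm L + 1 * (Rabs (x - u) + Rabs (y - v))).
      { pose proof (vnorm_sub_tri (vsub (gam x y) (gam u v)) L (0,0)).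
        replace (vsub (vsub (gam x y) (gam u v)) (0,0)) with (vsub (gam x y) (gam u v)) in H7 by veq.
        replace (vsub L (0,0)) with L in H7 by veq. lra. }
      assert (vnorm L <= vnorm (Dtg u v) + vnorm (Dsg u v)).
      { unfold L. eapply Rle_trans. apply vnorm_triangle. rewrite !vnorm_scal.
        assert (Rabs (x - u) <= 1) by lra. assert (Rabs (y - v) <= 1) by lra.
        pose proof (Rabs_pos (x - u)). pose proof (Rabs_pos (y - v)). nra. }
      lra.
    - pose proof (Tg (Dtg x y) (Dtg u v)). lra.
    - pose proof (Tg (Dsg x y) (Dsg u v)). lra. }
  assert (HMg : forall t s, I01 t -> vnorm (gam t s) <= Mg /\ vnorm (Dtg t s) <= Mg /\ vnorm (Dsg t s) <= Mg).
  { intros t s Ht.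
    destruct (reduce01 s) as [k Hk].
    assert (E1 : gam t s = gam t (s - IZR k)) by (rewrite <- (per_Z _ (gam t) (fun s => HCP t s Ht) k (s - IZR k)); f_equal; ring).
    assert (E2 : Dtg t s = Dtg t (s - IZR k)) by (rewrite <- (per_Z _ (Dtg t) (fun s => proj1 (cyl_periodic_derivs _ _ _ HC t s Ht)) k (s - IZR k)); f_equal; ring).
    assert (E3 : Dsg t s = Dsg t (s - IZR k)) by (rewrite <- (per_Z _ (Dsg t) (fun s => proj2 (cyl_periodic_derivs _ _ _ HC t s Ht)) k (s - IZR k)); f_equal; ring).
    rewrite E1, E2, E3. apply HMg0. split; auto. lra. }
  destruct (lebesgue2 0 1 0 1 (fun u v r => exists m, 0 < m /\ (forall s, m <= vnorm (Dc (ht u v) s)) /\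
       forall z' t', I01 z' -> I01 t' -> Rabs (z' - u) < r -> Rabs (t' - v) < r -> Cl (ht u v) (Dc (ht u v)) (m / 2) (ht z' t')))
    as [rho1 [Hrho1 L1]].
  { intros u v [Hu Hv]. destruct (in_I_Dc n (ht u v) (HI u v Hu Hv)) as [[P [D C]] [Nz _]].
    destruct (per_curve_lower (Dc (ht u v)) (deriv_periodic _ _ P D) C Nz) as [m [Hm Hlow]].
    destruct (Loc u v (m / 2) Hu Hv ltac:(lra)) as [r [Hr G]]. exists r; split; auto. exists m; auto. }
  destruct (lebesgue2 0 1 0 0 (fun u _ r => exists e, 0 < e /\ (forall f, Cl (ht 1 u) (Dc (ht 1 u)) e f -> is_embedding f) /\
       forall z' t', I01 z' -> I01 t' -> Rabs (z' - 1) < r -> Rabs (t' - u) < r -> Cl (ht 1 u) (Dc (ht 1 u)) e (ht z' t')))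
    as [rho2 [Hrho2 L2]].
  { intros u v [Hu _]. destruct (lemmaB n (ht 1 u) (HI 1 u I01_1 Hu) (Hii u Hu)) as [e [He HE]].
    destruct (Loc 1 u e I01_1 Hu He) as [r [Hr G]]. exists r; split; auto. exists e; auto. }
  destruct (lebesgue2 0 1 0 0 (fun u _ r => exists e, 0 < e /\ (forall f, Cl (ht u 0) (Dc (ht u 0)) e f -> is_embedding f) /\
       forall z' t', I01 z' -> I01 t' -> Rabs (z' - u) < r -> Rabs (t' - 0) < r -> Cl (ht u 0) (Dc (ht u 0)) e (ht z' t')))
    as [rho3 [Hrho3 L3]].
  { intros u v [Hu _]. destruct (lemmaB n (ht u 0) (HI u 0 Hu I01_0) (proj1 (Hiii u Hu))) as [e [He HE]].
    destruct (Loc u 0 e Hu I01_0 He) as [r [Hr G]]. exists r; split; auto. exists e; auto. }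
  destruct (lebesgue2 0 1 0 0 (fun u _ r => exists e, 0 < e /\ (forall f, Cl (ht u 1) (Dc (ht u 1)) e f -> is_embedding f) /\
       forall z' t', I01 z' -> I01 t' -> Rabs (z' - u) < r -> Rabs (t' - 1) < r -> Cl (ht u 1) (Dc (ht u 1)) e (ht z' t')))
    as [rho4 [Hrho4 L4]].
  { intros u v [Hu _]. destruct (lemmaB n (ht u 1) (HI u 1 Hu I01_1) (proj2 (Hiii u Hu))) as [e [He HE]].
    destruct (Loc u 1 e Hu I01_1 He) as [r [Hr G]]. exists r; split; auto. exists e; auto. }
  set (rho := Rmin (Rmin rho1 rho2) (Rmin rho3 rho4)).
  assert (Hrho : 0 < rho) by (unfold rho; repeat apply Rmin_glb_lt; auto).
  assert (R1 : rho <= rho1) by (unfold rho; eapply Rle_trans; [apply Rmin_l | apply Rmin_l]).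
  assert (R2 : rho <= rho2) by (unfold rho; eapply Rle_trans; [apply Rmin_l | apply Rmin_r]).
  assert (R3 : rho <= rho3) by (unfold rho; eapply Rle_trans; [apply Rmin_r | apply Rmin_l]).
  assert (R4 : rho <= rho4) by (unfold rho; eapply Rle_trans; [apply Rmin_r | apply Rmin_r]).
  clearbody rho.
  destruct (exists_N rho Hrho) as [N [HN HNr]].
  assert (Cgr : forall i j, (i <= N)%nat -> (j <= N)%nat -> C1_curve_with (grid ht N i j) (Dc (grid ht N i j))).
  { intros i j Hi Hj. unfold grid. apply (in_I_Dc n). apply HI; apply grid_I01; auto. }
  exists (hdef N gam ht). split; [|split; [|split; [|split]]].
  - intros z t Hz Ht. destruct (L1 z t (conj Hz Ht)) as [u [v [r [[Hu Hv] [Hr [[m [Hm [Hlow G]]] [Hzu [Htv Hrr]]]]]]]].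
    apply (lemmaA n (ht u v) _ m (m / 2) (HI u v Hu Hv) Hm Hlow ltac:(lra)).
    apply (h_Cl n); auto. intros z' t' Hz' Ht' Hzz Htt. apply G; auto.
    replace r with (r / 2 + r / 2) by field. apply tri_lt with z; lra.
    replace r with (r / 2 + r / 2) by field. apply tri_lt with t; lra.
  - intros t _. apply h_zero.
  - exists (hDt N Dtg ht), (hDs N Dsg ht). split.
    + intros z _. apply h_cyl; auto.
    + apply (h_zcont N gam Dtg Dsg ht (Rmax Mg (INR (S N) * (2 * INR N + 1) * Mh))).
      * eapply Rle_trans. 2: apply Rmax_r. repeat apply Rmult_le_pos. apply pos_INR.
        pose proof (pos_INR N); lra. unfold Mh; apply Rabs_pos.
      * intros i t s Hi Ht. apply row_bounds; auto. unfold Mh; apply Rabs_pos.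
  - intros t Ht. destruct (L2 t 0 (conj Ht (conj (Rle_refl 0) (Rle_refl 0)))) as [u [v [r [[Hu _] [Hr [[e [He [HE G]]] [Htu [_ Hrr]]]]]]]].
    apply HE. apply (h_Cl n); auto. intros z' t' Hz' Ht' Hzz Htt. apply G; auto. lra.
    replace r with (r / 2 + r / 2) by field. apply tri_lt with t; lra.
  - intros z Hz. split.
    + destruct (L3 z 0 (conj Hz (conj (Rle_refl 0) (Rle_refl 0)))) as [u [v [r [[Hu _] [Hr [[e [He [HE G]]] [Hzu [_ Hrr]]]]]]]].
      apply HE. apply (h_Cl n); auto. intros z' t' Hz' Ht' Hzz Htt. apply G; auto.
      replace r with (r / 2 + r / 2) by field. apply tri_lt with z; lra. lra.
    + destruct (L4 z 0 (conj Hz (conj (Rle_refl 0) (Rle_refl 0)))) as [u [v [r [[Hu _] [Hr [[e [He [HE G]]] [Hzu [_ Hrr]]]]]]]].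
      apply HE. apply (h_Cl n); auto. intros z' t' Hz' Ht' Hzz Htt. apply G; auto.
      replace r with (r / 2 + r / 2) by field. apply tri_lt with z; lra. lra.
Qed.
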